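(* Let $F=\mathrm{F}(1,\langle2\rangle,\mathbb Z[\tfrac12])$, $T=\mathrm{T}(1,\langle2\rangle,\mathbb Z[\tfrac12])$, $V=\mathrm{V}(1,\langle2\rangle,\mathbb Z[\tfrac12])$ (Thompson's groups). Let $x_0,x_1\in F$ be given by $$(t)x_0=\begin{cases}2t,&t\in[0,\tfrac14]\\ t+\tfrac14,&t\in[\tfrac14,\tfrac12]\\ \tfrac t2+\tfrac12,&t\in[\tfrac12,1)\end{cases}\qquad (t)x_1=\begin{cases}t,&t\in[0,\tfrac12]\\ 2t-\tfrac12,&t\in[\tfrac12,\tfrac58]\\ t+\tfrac18,&t\in[\tfrac58,\tfrac34]\\ \tfrac t2+\tfrac12,&t\in[\tfrac34,1)\end{cases}$$ and let $a=x_0^2$, $b=x_1x_0^{-1}x_1^{-1}x_0$ (product of right-acting maps). Then $\langle a,b\rangle=\langle b\rangle\wr\langle a\rangle\cong\mathbb Z\wr\mathbb Z$, and there is a single first-order formula in the group language with parameters from $F$ which defines the subgroup $\langle a,b\rangle$ in each of $F$, $T$ and $V$.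
   Context: $\mathrm{V}(r,\Lambda,A)$ is the group of bijections $x\colon[0,r)\to[0,r)$ that are piecewise affine with finitely many cuts and singular points, right-continuous everywhere, all slopes in $\Lambda$, all cut/singular points and their images in $A$; $\mathrm{F}(r,\Lambda,A)$ is its subgroup of elements continuous in the usual topology, $\mathrm{T}(r,\Lambda,A)$ its subgroup of elements continuous in the circle topology of $[0,r)\cong[0,r]/\{0,r\}$. Maps act on the right: $(t)(xy)=((t)x)y$. $\langle b\rangle\wr\langle a\rangle$ denotes the restricted wreath product: the conjugates $a^{-k}ba^k$ ($k\in\mathbb Z$) generate a free abelian group with basis $(a^{-k}ba^k)_k$, and $\langle a,b\rangle$ is its semidirect product with the infinite cyclic group $\langle a\rangle$. *)

(* Defs.v *)
From Stdlib Require Import Reals ZArith List ClassicalEpsilon.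
Open Scope R_scope.

Definition dyadic (x : R) : Prop := exists (m : Z) (k : nat), x = IZR m / 2 ^ k.

Definition in01 (t : R) : Prop := 0 <= t < 1.

(** Elements of V(1,<2>,Z[1/2]) are represented as maps R -> R that act as the
    identity outside [0,1) (so composition and equality are those of maps). *)

Definition pw_affine_dyadic (f : R -> R) : Prop :=
  exists (n : nat) (p : nat -> R),
    (0 < n)%nat /\ p O = 0 /\ p n = 1 /\
    (forall i, (i <= n)%nat -> dyadic (p i)) /\
    (forall i, (i < n)%nat -> p i < p (S i)) /\
    (forall i, (i < n)%nat ->
       dyadic (f (p i)) /\
       exists k : Z, forall t, p i <= t < p (S i) ->
         f t = f (p i) + powerRZ 2 k * (t - p i)).

Definition Vel (f : R -> R) : Prop :=
  (forall t, ~ in01 t -> f t = t) /\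
  (forall t, in01 t -> in01 (f t)) /\
  (forall s t, in01 s -> in01 t -> f s = f t -> s = t) /\
  (forall u, in01 u -> exists t, in01 t /\ f t = u) /\
  pw_affine_dyadic f.

(** F: continuous on [0,1) in the usual topology. *)
Definition Fel (f : R -> R) : Prop :=
  Vel f /\
  forall t, in01 t -> forall eps, 0 < eps -> exists delta, 0 < delta /\
    forall s, in01 s -> Rabs (s - t) < delta -> Rabs (f s - f t) < eps.

Definition circ_dist (x y : R) : R := Rmin (Rabs (x - y)) (1 - Rabs (x - y)).

(** T: continuous in the circle topology. *)
Definition Tel (f : R -> R) : Prop :=
  Vel f /\
  forall t, in01 t -> forall eps, 0 < eps -> exists delta, 0 < delta /\
    forall s, in01 s -> circ_dist s t < delta -> circ_dist (f s) (f t) < eps.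

(** Group operations; maps act on the right: (t)(xy) = ((t)x)y. *)
Definition mul (f g : R -> R) : R -> R := fun t => g (f t).
Definition one : R -> R := fun t => t.
Definition inv (f : R -> R) : R -> R :=
  fun t => epsilon (inhabits 0) (fun s => f s = t).

Definition npow (f : R -> R) (n : nat) : R -> R := Nat.iter n (fun g => mul g f) one.
Definition zpow (f : R -> R) (z : Z) : R -> R :=
  match z with
  | Z0 => one
  | Zpos q => npow f (Pos.to_nat q)
  | Zneg q => npow (inv f) (Pos.to_nat q)
  end.

Definition x0 (t : R) : R :=
  if Rlt_dec t 0 then t
  else if Rlt_dec t (1/4) then 2 * t
  else if Rlt_dec t (1/2) then t + 1/4
  else if Rlt_dec t 1 then t / 2 + 1/2
  else t.

Definition x1 (t : R) : R :=
  if Rlt_dec t 0 then t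
  else if Rlt_dec t (1/2) then t
  else if Rlt_dec t (5/8) then 2 * t - 1/2
  else if Rlt_dec t (3/4) then t + 1/8
  else if Rlt_dec t 1 then t / 2 + 1/2
  else t.

Definition a : R -> R := mul x0 x0.
Definition b : R -> R := mul (mul (mul x1 (inv x0)) (inv x1)) x0.

Definition bk (k : Z) : R -> R := mul (mul (zpow a (- k)) b) (zpow a k).

Definition zrange (N : nat) : list Z :=
  map (fun i => (Z.of_nat i - Z.of_nat N)%Z) (seq 0 (2 * N + 1)).
Definition zprod (N : nat) (h : Z -> (R -> R)) : R -> R :=
  fold_right mul one (map h (zrange N)).

Inductive gen2 (u v : R -> R) : (R -> R) -> Prop :=
| gen2_l : gen2 u v u
| gen2_r : gen2 u v v
| gen2_one : gen2 u v one
| gen2_mul : forall f g, gen2 u v f -> gen2 u v g -> gen2 u v (mul f g)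
| gen2_inv : forall f, gen2 u v f -> gen2 u v (inv f).

(** First-order logic in the language of groups {*, ^-1, 1},
    with parameters (constants tpar i, interpreted by a list of elements). *)
Inductive term : Type :=
| tvar : nat -> term
| tpar : nat -> term
| tone : term
| tmul : term -> term -> term
| tinv : term -> term.

Inductive formula : Type :=
| feq : term -> term -> formula
| fnot : formula -> formula
| fand : formula -> formula -> formula
| fex : nat -> formula -> formula.

Fixpoint teval (ps : list (R -> R)) (env : nat -> (R -> R)) (t : term) : R -> R :=
  match t with
  | tvar n => env n
  | tpar n => nth n ps one
  | tone => one
  | tmul t1 t2 => mul (teval ps env t1) (teval ps env t2)
  | tinv t1 => inv (teval ps env t1)
  end.

Definition upd (env : nat -> (R -> R)) (n : nat) (x : R -> R) : nat -> (R -> R) :=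
  fun m => if Nat.eqb m n then x else env m.

Fixpoint sat (D : (R -> R) -> Prop) (ps : list (R -> R))
         (env : nat -> (R -> R)) (phi : formula) : Prop :=
  match phi with
  | feq t1 t2 => teval ps env t1 = teval ps env t2
  | fnot p => ~ sat D ps env p
  | fand p q => sat D ps env p /\ sat D ps env q
  | fex n p => exists x, D x /\ sat D ps (upd env n x) p
  end.

(** phi (free variable 0; any other free variable is read as 1) with
    parameters ps defines the subset P of the group D. *)
Definition defines (D : (R -> R) -> Prop) (ps : list (R -> R)) (phi : formula)
           (P : (R -> R) -> Prop) : Prop :=
  forall g, D g ->
    (sat D ps (fun n => match n with O => g | S _ => one end) phi <-> P g).

(* Main.v *)
Require Import Defs.
From Stdlib Require Import Reals ZArith List ClassicalEpsilon Classical Lia Lra FunctionalExtensionality.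
Open Scope R_scope.

Lemma two_pow_pos : forall k, 0 < 2 ^ k.
Proof. intros; apply pow_lt; lra. Qed.
Lemma two_pow_IZR : forall k, 2 ^ k = IZR (2 ^ Z.of_nat k).
Proof. intros; rewrite <- pow_IZR; reflexivity. Qed.

Lemma dy_IZR : forall m, dyadic (IZR m).
Proof. intros m; exists m, 0%nat; simpl; field. Qed.

Lemma dy_add : forall x y, dyadic x -> dyadic y -> dyadic (x + y).
Proof.
  intros x y [m1 [k1 H1]] [m2 [k2 H2]]; subst.
  exists (m1 * 2 ^ Z.of_nat k2 + m2 * 2 ^ Z.of_nat k1)%Z, (k1 + k2)%nat.
  rewrite plus_IZR, !mult_IZR, <- !two_pow_IZR, pow_add.
  pose proof (two_pow_pos k1); pose proof (two_pow_pos k2). field; lra.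
Qed.

Lemma dy_opp : forall x, dyadic x -> dyadic (- x).
Proof. intros x [m [k H]]; subst; exists (- m)%Z, k; rewrite opp_IZR; field.
  pose proof (two_pow_pos k); lra. Qed.

Lemma dy_sub : forall x y, dyadic x -> dyadic y -> dyadic (x - y).
Proof. intros; unfold Rminus; apply dy_add; auto; apply dy_opp; auto. Qed.

Lemma dy_mul : forall x y, dyadic x -> dyadic y -> dyadic (x * y).
Proof.
  intros x y [m1 [k1 H1]] [m2 [k2 H2]]; subst.
  exists (m1 * m2)%Z, (k1 + k2)%nat.
  rewrite mult_IZR, pow_add.
  pose proof (two_pow_pos k1); pose proof (two_pow_pos k2). field; lra.
Qed.

Lemma dy_pow2 : forall z x, dyadic x -> dyadic (powerRZ 2 z * x).
Proof.
  intros z x [m [k H]]; subst. destruct z as [|p|p]; simpl.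
  - exists m, k; ring.
  - exists (m * 2 ^ Z.of_nat (Pos.to_nat p))%Z, k.
    rewrite mult_IZR, <- two_pow_IZR. field. pose proof (two_pow_pos k); lra.
  - exists m, (k + Pos.to_nat p)%nat. rewrite pow_add.
    pose proof (two_pow_pos k); pose proof (two_pow_pos (Pos.to_nat p)). field; lra.
Qed.

Lemma dy_div2k : forall m k, dyadic (IZR m / 2 ^ k).
Proof. intros; exists m, k; reflexivity. Qed.

Lemma powerRZ2_pos : forall z, 0 < powerRZ 2 z.
Proof. intros; apply powerRZ_lt; lra. Qed.

Definition bij (f : R -> R) := (forall x, inv f (f x) = x) /\ (forall y, f (inv f y) = y).

Lemma inv_spec : forall f y, (exists s, f s = y) -> f (inv f y) = y.
Proof. intros f y H; unfold inv; apply (epsilon_spec (inhabits 0) (fun s => f s = y) H). Qed.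

Lemma bij_intro : forall f g, (forall x, g (f x) = x) -> (forall y, f (g y) = y) -> bij f.
Proof.
  intros f g H1 H2; split.
  - intros x. assert (E : f (inv f (f x)) = f x) by (apply inv_spec; eauto).
    rewrite <- (H1 (inv f (f x))), E, H1; reflexivity.
  - intros y; apply inv_spec; eauto.
Qed.

Lemma inv_unique : forall f g, (forall x, g (f x) = x) -> (forall y, f (g y) = y) -> inv f = g.
Proof.
  intros f g H1 H2; apply functional_extensionality; intros y.
  assert (E : f (inv f y) = y) by (apply inv_spec; eauto).
  rewrite <- E at 2; rewrite H1; reflexivity.
Qed.

Lemma bij_inj : forall f s t, bij f -> f s = f t -> s = t.
Proof. intros f s t [H1 H2] E; rewrite <- (H1 s), E, H1; reflexivity. Qed.

Lemma bij_one : bij one.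
Proof. apply (bij_intro one one); reflexivity. Qed.
Lemma inv_one : inv one = one.
Proof. apply inv_unique; reflexivity. Qed.

Lemma bij_inv : forall f, bij f -> bij (inv f).
Proof. intros f [H1 H2]; apply (bij_intro (inv f) f); auto. Qed.
Lemma inv_inv : forall f, bij f -> inv (inv f) = f.
Proof. intros f [H1 H2]; apply inv_unique; auto. Qed.

Lemma bij_mul : forall f g, bij f -> bij g -> bij (mul f g).
Proof.
  intros f g [F1 F2] [G1 G2]; apply (bij_intro _ (mul (inv g) (inv f))); unfold mul; intros.
  - rewrite G1, F1; auto.
  - rewrite F2, G2; auto.
Qed.
Lemma inv_mul : forall f g, bij f -> bij g -> inv (mul f g) = mul (inv g) (inv f).
Proof.
  intros f g [F1 F2] [G1 G2]; apply inv_unique; unfold mul; intros.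
  - rewrite G1, F1; auto.
  - rewrite F2, G2; auto.
Qed.

Lemma npow_S : forall f n t, npow f (S n) t = f (npow f n t).
Proof. reflexivity. Qed.
Lemma npow_0 : forall f t, npow f 0 t = t.
Proof. reflexivity. Qed.
Lemma npow_S' : forall f n t, npow f (S n) t = npow f n (f t).
Proof. intros f n; induction n; intros t; [reflexivity|]. rewrite npow_S, IHn; reflexivity. Qed.

Lemma zpow_nat : forall f n, zpow f (Z.of_nat n) = npow f n.
Proof.
  intros f [|n]; [reflexivity|]. simpl. rewrite SuccNat2Pos.id_succ. reflexivity.
Qed.
Lemma zpow_negnat : forall f n, zpow f (- Z.of_nat n) = npow (inv f) n.
Proof.
  intros f [|n]; [reflexivity|]. simpl. rewrite SuccNat2Pos.id_succ. reflexivity.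
Qed.

Lemma Z_cases : forall z, (exists n, z = Z.of_nat n) \/ (exists n, z = (- Z.of_nat (S n))%Z).
Proof.
  intros z. destruct (Z_le_gt_dec 0 z).
  - left; exists (Z.to_nat z); lia.
  - right; exists (Z.to_nat (- z) - 1)%nat; lia.
Qed.

Lemma npow_inv_cancel : forall f n t, bij f -> npow f n (npow (inv f) n t) = t.
Proof.
  intros f n; induction n; intros t Hf; [reflexivity|].
  rewrite npow_S', (npow_S (inv f)). destruct Hf as [H1 H2]. rewrite H2. apply IHn; split; auto.
Qed.
Lemma npow_inv_cancel' : forall f n t, bij f -> npow (inv f) n (npow f n t) = t.
Proof.
  intros f n; induction n; intros t Hf; [reflexivity|].
  rewrite (npow_S' (inv f)), (npow_S f). destruct Hf as [H1 H2]. rewrite H1. apply IHn; split; auto.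
Qed.

Lemma zpow_succ : forall f z t, bij f -> zpow f (Z.succ z) t = f (zpow f z t).
Proof.
  intros f z t Hf. destruct (Z_cases z) as [[n ->]|[n ->]].
  - rewrite <- Nat2Z.inj_succ, !zpow_nat; reflexivity.
  - replace (Z.succ (- Z.of_nat (S n))) with (- Z.of_nat n)%Z by lia.
    rewrite !zpow_negnat, npow_S. destruct Hf as [H1 H2]; rewrite H2; reflexivity.
Qed.
Lemma zpow_pred : forall f z t, bij f -> zpow f (Z.pred z) t = inv f (zpow f z t).
Proof.
  intros f z t Hf. destruct (Z_cases z) as [[[|n] ->]|[n ->]].
  - reflexivity.
  - replace (Z.pred (Z.of_nat (S n))) with (Z.of_nat n) by lia.
    rewrite !zpow_nat, npow_S. destruct Hf as [H1 H2]; rewrite H1; reflexivity.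
  - replace (Z.pred (- Z.of_nat (S n))) with (- Z.of_nat (S (S n)))%Z by lia.
    rewrite !zpow_negnat, npow_S; reflexivity.
Qed.

Lemma zpow_add : forall f i j t, bij f -> zpow f (i + j) t = zpow f j (zpow f i t).
Proof.
  intros f i j t Hf. revert t. pattern j; apply Z.peano_ind; clear j.
  - intros; rewrite Z.add_0_r; reflexivity.
  - intros j IH t. rewrite Z.add_succ_r, !zpow_succ, IH; auto.
  - intros j IH t. rewrite Z.add_pred_r, !zpow_pred, IH; auto.
Qed.

Lemma zpow_0 : forall f t, zpow f 0 t = t.
Proof. reflexivity. Qed.
Lemma zpow_1 : forall f t, zpow f 1 t = f t.
Proof. reflexivity. Qed.
Lemma zpow_m1 : forall f t, zpow f (-1) t = inv f t.
Proof. reflexivity. Qed.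

Lemma zpow_cancel : forall f i t, bij f -> zpow f (- i) (zpow f i t) = t.
Proof. intros. rewrite <- zpow_add; auto. rewrite Z.add_opp_diag_r; reflexivity. Qed.
Lemma zpow_cancel' : forall f i t, bij f -> zpow f i (zpow f (- i) t) = t.
Proof. intros. rewrite <- zpow_add; auto. rewrite Z.add_opp_diag_l; reflexivity. Qed.

Lemma bij_zpow : forall f i, bij f -> bij (zpow f i).
Proof. intros f i Hf; apply (bij_intro _ (zpow f (- i))); intros; [apply zpow_cancel|apply zpow_cancel']; auto. Qed.
Lemma inv_zpow : forall f i, bij f -> inv (zpow f i) = zpow f (- i).
Proof. intros f i Hf; apply inv_unique; intros; [apply zpow_cancel|apply zpow_cancel']; auto. Qed.

Lemma zpow_mul_eq : forall f i j, bij f -> mul (zpow f i) (zpow f j) = zpow f (i + j).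
Proof. intros; apply functional_extensionality; intros; unfold mul; rewrite zpow_add; auto. Qed.

Lemma zpow_zpow : forall f m j t, bij f -> zpow (zpow f m) j t = zpow f (m * j) t.
Proof.
  intros f m j t Hf. revert t. pattern j; apply Z.peano_ind; clear j.
  - intros; rewrite Z.mul_0_r; reflexivity.
  - intros j IH t. rewrite zpow_succ by (apply bij_zpow; auto). rewrite IH.
    rewrite Z.mul_succ_r, zpow_add; auto.
  - intros j IH t. rewrite zpow_pred by (apply bij_zpow; auto). rewrite IH.
    rewrite Z.mul_pred_r, inv_zpow by auto. unfold Z.sub. rewrite zpow_add; auto.
Qed.

Lemma zpow_conj : forall C f m t, bij C -> bij f ->
  zpow (mul (mul (inv C) f) C) m t = C (zpow f m (inv C t)).
Proof.
  intros C f m t HC Hf. revert t. pattern m; apply Z.peano_ind; clear m.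
  - intros t; rewrite !zpow_0. destruct HC as [_ H]; rewrite H; reflexivity.
  - intros m IH t. rewrite zpow_succ by (apply bij_mul; [apply bij_mul; [apply bij_inv|]|]; auto).
    rewrite IH. unfold mul. rewrite zpow_succ by auto. destruct HC as [H1 H2]; rewrite H1; reflexivity.
  - intros m IH t. rewrite zpow_pred by (apply bij_mul; [apply bij_mul; [apply bij_inv|]|]; auto).
    assert (HiC : bij (inv C)) by (apply bij_inv; auto).
    rewrite IH. rewrite (inv_mul (mul (inv C) f) C) by (auto; apply bij_mul; auto).
    rewrite (inv_mul (inv C) f) by auto.
    rewrite inv_inv by auto. unfold mul. rewrite zpow_pred by auto.
    destruct HC as [H1 H2]; rewrite H1; reflexivity.
Qed.

Lemma zpow_comm : forall f g m t, bij f -> bij g -> (forall s, f (g s) = g (f s)) ->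
  f (zpow g m t) = zpow g m (f t).
Proof.
  intros f g m t Hf Hg Hc. revert t. pattern m; apply Z.peano_ind; clear m.
  - reflexivity.
  - intros m IH t. rewrite !zpow_succ by auto. rewrite Hc, IH; reflexivity.
  - intros m IH t. rewrite !zpow_pred by auto. rewrite <- IH.
    apply (bij_inj g); auto. destruct Hg as [G1 G2]. rewrite G2, <- Hc, G2; reflexivity.
Qed.

Lemma dy_inv2 : dyadic (/ 2). Proof. exists 1%Z, 1%nat; simpl; field. Qed.
Lemma dy_inv4 : dyadic (/ 4). Proof. exists 1%Z, 2%nat; simpl; field. Qed.
Lemma dy_inv8 : dyadic (/ 8). Proof. exists 1%Z, 3%nat; simpl; field. Qed.
Lemma dy_inv16 : dyadic (/ 16). Proof. exists 1%Z, 4%nat; simpl; field. Qed.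
Ltac dy := unfold Rdiv; repeat first [apply dy_IZR | apply dy_inv2 | apply dy_inv4 | apply dy_inv8 | apply dy_inv16 | simple apply dy_add | simple apply dy_sub | simple apply dy_mul | simple apply dy_opp].


Definition x0i (t : R) : R :=
  if Rlt_dec t 0 then t
  else if Rlt_dec t (1/2) then t / 2
  else if Rlt_dec t (3/4) then t - 1/4
  else if Rlt_dec t 1 then 2 * t - 1
  else t.
Definition x1i (t : R) : R :=
  if Rlt_dec t 0 then t
  else if Rlt_dec t (1/2) then t
  else if Rlt_dec t (3/4) then t / 2 + 1/4
  else if Rlt_dec t (7/8) then t - 1/8
  else if Rlt_dec t 1 then 2 * t - 1
  else t.
Definition bexp (t : R) : R :=
  if Rlt_dec t (1/2) then t
  else if Rlt_dec t (5/8) then 2 * t - 1/2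
  else if Rlt_dec t (7/8) then t / 2 + 7/16
  else t.
Definition binv (t : R) : R :=
  if Rlt_dec t (1/2) then t
  else if Rlt_dec t (3/4) then t / 2 + 1/4
  else if Rlt_dec t (7/8) then 2 * t - 7/8
  else t.

Ltac split_if H := repeat match type of H with context [Rlt_dec ?a ?b] => destruct (Rlt_dec a b); try (exfalso; lra) end.
Ltac split_g := repeat match goal with |- context [Rlt_dec ?a ?b] => destruct (Rlt_dec a b); try (exfalso; lra) end.
Ltac ev f x := let u := fresh "u" in let Hu := fresh "Hu" in remember (f x) as u eqn:Hu; unfold f in Hu; split_if Hu.

Lemma Vel_of : forall f g,
  (forall t, ~ in01 t -> f t = t) -> (forall t, in01 t -> in01 (f t)) ->
  (forall s t, s < t -> f s < f t) -> (forall t, in01 t -> in01 (g t) /\ f (g t) = t) ->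
  pw_affine_dyadic f -> Vel f.
Proof.
  intros f g H1 H2 H3 H4 H5; split; [auto|split; [auto|split; [|split; [|auto]]]].
  - intros s t _ _ E. destruct (Rtotal_order s t) as [L|[L|L]]; auto;
      [apply H3 in L|apply H3 in L]; lra.
  - intros u Hu; exists (g u); apply H4; auto.
Qed.

Lemma Rabs_lip : forall f s t, (forall s t, s <= t -> f s <= f t) -> (forall s t, s <= t -> f t - f s <= 2 * (t - s)) ->
  Rabs (f s - f t) <= 2 * Rabs (s - t).
Proof.
  intros f s t M L. destruct (Rle_dec s t).
  - pose proof (M s t r); pose proof (L s t r).
    rewrite (Rabs_left1 (s - t)) by lra. rewrite Rabs_left1 by lra. lra.
  - assert (t <= s) by lra. pose proof (M t s H); pose proof (L t s H).
    rewrite (Rabs_right (s - t)) by lra. rewrite Rabs_right by lra. lra.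
Qed.

Lemma Fel_of : forall f, Vel f -> (forall s t, s <= t -> f s <= f t) ->
  (forall s t, s <= t -> f t - f s <= 2 * (t - s)) -> Fel f.
Proof.
  intros f V M L; split; auto. intros t Ht eps He. exists (eps / 2); split; [lra|].
  intros s Hs D. pose proof (Rabs_lip f s t M L). lra.
Qed.

Lemma Rmin_lt_cases : forall x y d, Rmin x y < d -> x < d \/ y < d.
Proof. intros x y d; unfold Rmin; destruct (Rle_dec x y); auto. Qed.

Lemma circ_le : forall x y, circ_dist x y <= Rabs (x - y).
Proof. intros; unfold circ_dist; apply Rmin_l. Qed.

Lemma Tel_of : forall f, Vel f -> (forall s t, s <= t -> f s <= f t) ->
  (forall s t, s <= t -> f t - f s <= 2 * (t - s)) -> f 0 = 0 ->
  (forall s, 3/4 <= s < 1 -> 2 * s - 1 <= f s) -> Tel f.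
Proof.
  intros f V M L F0 N1; split; auto. intros t Ht eps He.
  destruct (Req_dec t 0) as [T0|T0].
  - subst t. exists (Rmin (eps / 4) (1/8)); split.
    { apply Rmin_glb_lt; lra. }
    intros s Hs D. pose proof (Rmin_l (eps/4) (1/8)); pose proof (Rmin_r (eps/4) (1/8)).
    unfold circ_dist in D. rewrite Rminus_0_r, Rabs_right in D by (destruct Hs; lra).
    destruct V as [_ [V2 _]]. pose proof (V2 s Hs) as Hfs. unfold in01 in *.
    rewrite F0; unfold circ_dist; rewrite Rminus_0_r, (Rabs_right (f s)) by lra.
    apply Rmin_lt_cases in D. destruct D as [D|D].
    + eapply Rle_lt_trans; [apply Rmin_l|]. pose proof (L 0 s (proj1 Hs)). rewrite F0 in H1. lra.
    + eapply Rle_lt_trans; [apply Rmin_r|]. pose proof (N1 s). lra.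
  - assert (Tp : 0 < t) by (unfold in01 in Ht; lra).
    exists (Rmin (eps / 2) (Rmin (t/2) ((1 - t)/2))); split.
    { unfold in01 in Ht. repeat apply Rmin_glb_lt; lra. }
    intros s Hs D. pose proof (Rmin_l (eps/2) (Rmin (t/2) ((1 - t)/2))).
    pose proof (Rmin_r (eps/2) (Rmin (t/2) ((1 - t)/2))).
    pose proof (Rmin_l (t/2) ((1 - t)/2)); pose proof (Rmin_r (t/2) ((1 - t)/2)).
    unfold circ_dist in D. apply Rmin_lt_cases in D. unfold in01 in *.
    assert (Rabs (s - t) < Rmin (eps / 2) (Rmin (t / 2) ((1 - t) / 2))).
    { destruct D as [D|D]; auto. exfalso. destruct (Rle_dec s t).
      - rewrite Rabs_left1 in D by lra. lra.
      - rewrite Rabs_right in D by lra. lra. }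
    eapply Rle_lt_trans; [apply circ_le|]. pose proof (Rabs_lip f s t M L). lra.
Qed.

Lemma x0_x0i : forall t, x0 (x0i t) = t. Proof. intros t; ev x0i t; unfold x0; split_g; lra. Qed.
Lemma x0i_x0 : forall t, x0i (x0 t) = t. Proof. intros t; ev x0 t; unfold x0i; split_g; lra. Qed.
Lemma x1_x1i : forall t, x1 (x1i t) = t. Proof. intros t; ev x1i t; unfold x1; split_g; lra. Qed.
Lemma x1i_x1 : forall t, x1i (x1 t) = t. Proof. intros t; ev x1 t; unfold x1i; split_g; lra. Qed.
Lemma bexp_binv : forall t, bexp (binv t) = t. Proof. intros t; ev binv t; unfold bexp; split_g; lra. Qed.
Lemma binv_bexp : forall t, binv (bexp t) = t. Proof. intros t; ev bexp t; unfold binv; split_g; lra. Qed.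

Lemma bij_x0 : bij x0. Proof. exact (bij_intro _ _ x0i_x0 x0_x0i). Qed.
Lemma bij_x0i : bij x0i. Proof. exact (bij_intro _ _ x0_x0i x0i_x0). Qed.
Lemma bij_x1 : bij x1. Proof. exact (bij_intro _ _ x1i_x1 x1_x1i). Qed.
Lemma bij_x1i : bij x1i. Proof. exact (bij_intro _ _ x1_x1i x1i_x1). Qed.
Lemma bij_bexp : bij bexp. Proof. exact (bij_intro _ _ binv_bexp bexp_binv). Qed.
Lemma inv_x0 : inv x0 = x0i. Proof. exact (inv_unique _ _ x0i_x0 x0_x0i). Qed.
Lemma inv_x0i : inv x0i = x0. Proof. exact (inv_unique _ _ x0_x0i x0i_x0). Qed.
Lemma inv_x1 : inv x1 = x1i. Proof. exact (inv_unique _ _ x1i_x1 x1_x1i). Qed.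
Lemma inv_x1i : inv x1i = x1. Proof. exact (inv_unique _ _ x1_x1i x1i_x1). Qed.
Lemma inv_bexp : inv bexp = binv. Proof. exact (inv_unique _ _ binv_bexp bexp_binv). Qed.

Lemma b_eq : b = bexp.
Proof.
  unfold b; rewrite inv_x0, inv_x1. apply functional_extensionality; intros t; unfold mul.
  ev x1 t; ev x0i u; ev x1i u0; ev x0 u1; unfold bexp; split_g; lra.
Qed.
Lemma bij_b : bij b. Proof. rewrite b_eq; exact bij_bexp. Qed.
Lemma inv_b : inv b = binv. Proof. rewrite b_eq; exact inv_bexp. Qed.

Lemma not_in01 : forall t, ~ in01 t -> t < 0 \/ 1 <= t.
Proof. intros t H; unfold in01 in H; destruct (Rlt_dec t 0); [left; auto|right]. destruct (Rle_dec 1 t); auto. exfalso; apply H; lra. Qed.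

Lemma all_of : forall f g,
  (forall t, t < 0 \/ 1 <= t -> f t = t) -> (forall t, 0 <= t < 1 -> 0 <= f t < 1) ->
  (forall s t, s < t -> f s < f t) -> (forall t, f (g t) = t) -> (forall t, 0 <= t < 1 -> 0 <= g t < 1) ->
  (forall s t, s <= t -> f t - f s <= 2 * (t - s)) -> f 0 = 0 ->
  (forall s, 3/4 <= s < 1 -> 2 * s - 1 <= f s) -> pw_affine_dyadic f ->
  Vel f /\ Fel f /\ Tel f.
Proof.
  intros f g H1 H2 H3 H4 H5 H6 H7 H8 H9.
  assert (V : Vel f).
  { apply (Vel_of f g); auto.
    - intros t Ht; apply H1, not_in01; auto.
    - intros t Ht; unfold in01 in *; split; auto. }
  assert (M : forall s t, s <= t -> f s <= f t).
  { intros s t L; destruct L as [L|L]; [apply Rlt_le, H3; auto| subst; lra]. }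
  split; [exact V|split].
  - apply Fel_of; auto.
  - apply Tel_of; auto.
Qed.

Ltac pieces := let i := fresh "i" in let Hi := fresh "Hi" in intros i Hi;
  repeat (destruct i as [|i]; [|try (exfalso; lia)]).

Ltac slope_tac f k := split; [unfold f; split_g; dy | exists k; let t := fresh "t" in intros t ?; unfold f; split_g; simpl; lra].

Lemma x0_all : Vel x0 /\ Fel x0 /\ Tel x0.
Proof.
  apply (all_of x0 x0i).
  - intros t Ht; unfold x0; split_g; lra.
  - intros t Ht; unfold x0; split_g; lra.
  - intros s t H; ev x0 s; ev x0 t; lra.
  - exact x0_x0i.
  - intros t Ht; unfold x0i; split_g; lra.
  - intros s t H; ev x0 s; ev x0 t; lra.
  - unfold x0; split_g; lra.
  - intros s Hs; unfold x0; split_g; lra.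
  - exists 3%nat, (fun i => match i with 0 => 0 | 1 => 1/4 | 2 => 1/2 | _ => 1 end).
    split; [lia|split; [reflexivity|split; [reflexivity|split; [|split]]]].
    + pieces; simpl; dy.
    + pieces; simpl; lra.
    + pieces; simpl.
      * slope_tac x0 1%Z.
      * slope_tac x0 0%Z.
      * slope_tac x0 (-1)%Z.
Qed.

Lemma x0i_all : Vel x0i /\ Fel x0i /\ Tel x0i.
Proof.
  apply (all_of x0i x0).
  - intros t Ht; unfold x0i; split_g; lra.
  - intros t Ht; unfold x0i; split_g; lra.
  - intros s t H; ev x0i s; ev x0i t; lra.
  - exact x0i_x0.
  - intros t Ht; unfold x0; split_g; lra.
  - intros s t H; ev x0i s; ev x0i t; lra.
  - unfold x0i; split_g; lra.
  - intros s Hs; unfold x0i; split_g; lra.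
  - exists 3%nat, (fun i => match i with 0 => 0 | 1 => 1/2 | 2 => 3/4 | _ => 1 end).
    split; [lia|split; [reflexivity|split; [reflexivity|split; [|split]]]].
    + pieces; simpl; dy.
    + pieces; simpl; lra.
    + pieces; simpl.
      * slope_tac x0i (-1)%Z.
      * slope_tac x0i 0%Z.
      * slope_tac x0i 1%Z.
Qed.

Lemma x1_all : Vel x1 /\ Fel x1 /\ Tel x1.
Proof.
  apply (all_of x1 x1i).
  - intros t Ht; unfold x1; split_g; lra.
  - intros t Ht; unfold x1; split_g; lra.
  - intros s t H; ev x1 s; ev x1 t; lra.
  - exact x1_x1i.
  - intros t Ht; unfold x1i; split_g; lra.
  - intros s t H; ev x1 s; ev x1 t; lra.
  - unfold x1; split_g; lra.
  - intros s Hs; unfold x1; split_g; lra.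
  - exists 4%nat, (fun i => match i with 0 => 0 | 1 => 1/2 | 2 => 5/8 | 3 => 3/4 | _ => 1 end).
    split; [lia|split; [reflexivity|split; [reflexivity|split; [|split]]]].
    + pieces; simpl; dy.
    + pieces; simpl; lra.
    + pieces; simpl.
      * slope_tac x1 0%Z.
      * slope_tac x1 1%Z.
      * slope_tac x1 0%Z.
      * slope_tac x1 (-1)%Z.
Qed.

Lemma x1i_all : Vel x1i /\ Fel x1i /\ Tel x1i.
Proof.
  apply (all_of x1i x1).
  - intros t Ht; unfold x1i; split_g; lra.
  - intros t Ht; unfold x1i; split_g; lra.
  - intros s t H; ev x1i s; ev x1i t; lra.
  - exact x1i_x1.
  - intros t Ht; unfold x1; split_g; lra.
  - intros s t H; ev x1i s; ev x1i t; lra.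
  - unfold x1i; split_g; lra.
  - intros s Hs; unfold x1i; split_g; lra.
  - exists 4%nat, (fun i => match i with 0 => 0 | 1 => 1/2 | 2 => 3/4 | 3 => 7/8 | _ => 1 end).
    split; [lia|split; [reflexivity|split; [reflexivity|split; [|split]]]].
    + pieces; simpl; dy.
    + pieces; simpl; lra.
    + pieces; simpl.
      * slope_tac x1i 0%Z.
      * slope_tac x1i (-1)%Z.
      * slope_tac x1i 0%Z.
      * slope_tac x1i 1%Z.
Qed.

Lemma one_all : Vel one /\ Fel one /\ Tel one.
Proof.
  apply (all_of one one); unfold one; intros; try lra; auto.
  exists 1%nat, (fun i => match i with 0 => 0 | _ => 1 end).
  split; [lia|split; [reflexivity|split; [reflexivity|split; [|split]]]].
  + pieces; simpl; dy.
  + pieces; simpl; lra.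
  + pieces; simpl. split; [dy|exists 0%Z; intros; simpl; lra].
Qed.

Definition piece (L : list R) (l t : R) : Prop :=
  l <= t < 1 /\ forall l', In l' L -> l < l' -> t < l'.

Definition Good (f : R -> R) (L : list R) : Prop :=
  In 0 L /\ forall l, In l L -> dyadic l /\ 0 <= l < 1 /\ dyadic (f l) /\
    exists k, forall t, piece L l t -> f t = f l + powerRZ 2 k * (t - l).

Lemma dy_one : dyadic 1. Proof. apply dy_IZR. Qed.

Lemma pw_good : forall f, pw_affine_dyadic f -> exists L, Good f L.
Proof.
  intros f [n [p [Hn [H0 [Hnn [Hd [Hinc Hsl]]]]]]].
  assert (Mono : forall i j, (i < j)%nat -> (j <= n)%nat -> p i < p j).
  { intros i j Hij; induction Hij; intros Hj.
    - apply Hinc; lia.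
    - eapply Rlt_trans; [apply IHHij; lia|apply Hinc; lia]. }
  assert (Rng : forall i, (i < n)%nat -> 0 <= p i < 1).
  { intros i Hi; split.
    - destruct i; [lra|]. rewrite <- H0; left; apply Mono; lia.
    - rewrite <- Hnn; apply Mono; lia. }
  exists (map p (seq 0 n)). split.
  - rewrite <- H0. apply in_map, in_seq; lia.
  - intros l Hl. apply in_map_iff in Hl. destruct Hl as [i [<- Hi]]. apply in_seq in Hi.
    destruct (Hsl i ltac:(lia)) as [Hfd [k Hk]].
    split; [apply Hd; lia|split; [apply Rng; lia|split; [auto|]]].
    exists k. intros t [[T1 T2] T3]. apply Hk. split; auto.
    destruct (Nat.eq_dec (S i) n) as [E|E].
    + rewrite E, Hnn; auto.
    + apply T3; [apply in_map, in_seq; lia|apply Hinc; lia].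
Qed.

Definition nxt (L : list R) (x : R) : R :=
  fold_right Rmin 1 (filter (fun l => if Rlt_dec x l then true else false) L).

Lemma fr_min_le1 : forall M, fold_right Rmin 1 M <= 1.
Proof. induction M; simpl; [lra|]. pose proof (Rmin_r a (fold_right Rmin 1 M)); lra. Qed.
Lemma fr_min_lb : forall M m, In m M -> fold_right Rmin 1 M <= m.
Proof.
  induction M; simpl; intros m H; [contradiction|]. destruct H as [<-|H].
  - apply Rmin_l.
  - pose proof (IHM m H); pose proof (Rmin_r a (fold_right Rmin 1 M)); lra.
Qed.
Lemma fr_min_in : forall M, fold_right Rmin 1 M = 1 \/ In (fold_right Rmin 1 M) M.
Proof.
  induction M; simpl; auto. destruct (Rle_dec a (fold_right Rmin 1 M)).
  - rewrite Rmin_left by auto. right; left; auto.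
  - rewrite Rmin_right by lra. destruct IHM as [E|E]; [left|right; right]; auto.
Qed.
Lemma fr_min_gt : forall M x, x < 1 -> (forall m, In m M -> x < m) -> x < fold_right Rmin 1 M.
Proof.
  induction M; simpl; intros x H1 H2; auto. unfold Rmin at 1.
  destruct (Rle_dec a (fold_right Rmin 1 M)); auto.
Qed.

Lemma nxt_le1 : forall L x, nxt L x <= 1.
Proof. intros; apply fr_min_le1. Qed.
Lemma nxt_in : forall L x, nxt L x = 1 \/ In (nxt L x) L.
Proof.
  intros L x; unfold nxt. destruct (fr_min_in (filter (fun l => if Rlt_dec x l then true else false) L)) as [E|E]; auto.
  right; apply filter_In in E; tauto.
Qed.
Lemma nxt_gt : forall L x, x < 1 -> x < nxt L x.
Proof.
  intros L x H; apply fr_min_gt; auto. intros m Hm; apply filter_In in Hm. destruct Hm as [_ Hm].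
  destruct (Rlt_dec x m); auto; discriminate.
Qed.
Lemma nxt_lb : forall L x l, In l L -> x < l -> nxt L x <= l.
Proof.
  intros L x l H1 H2; apply fr_min_lb, filter_In; split; auto. destruct (Rlt_dec x l); auto.
Qed.

Lemma NoDup_incr : forall (p : nat -> R) m k, (forall i j, (k <= i)%nat -> (i < j)%nat -> (j < k + m)%nat -> p i < p j) ->
  NoDup (map p (seq k m)).
Proof.
  intros p m; induction m; intros k H; simpl; constructor.
  - intros Hin. apply in_map_iff in Hin. destruct Hin as [j [E Hj]]. apply in_seq in Hj.
    assert (p k < p j) by (apply H; lia). lra.
  - apply IHm. intros i j Hi Hij Hj; apply H; lia.
Qed.

Lemma good_pw : forall f L, Good f L -> pw_affine_dyadic f.
Proof.
  intros f L [H0 HL].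
  set (p := fun i => Nat.iter i (nxt L) 0).
  assert (PS : forall i, p (S i) = nxt L (p i)) by reflexivity.
  assert (P1 : forall i, In (p i) L \/ p i = 1).
  { intros [|i]; [left; auto|]. rewrite PS. destruct (nxt_in L (p i)); auto. }
  assert (P2 : forall i, p i <= 1).
  { intros [|i]; [simpl; lra|]. rewrite PS; apply nxt_le1. }
  assert (P3 : forall i, p i < 1 -> p i < p (S i)).
  { intros i H; rewrite PS; apply nxt_gt; auto. }
  assert (P4 : exists i, p i = 1).
  { apply NNPP; intros C.
    assert (Lt : forall i, p i < 1).
    { intros i; destruct (P2 i); auto. exfalso; apply C; eauto. }
    assert (Inc : forall i j, (i < j)%nat -> p i < p j).
    { intros i j Hij; induction Hij; [apply P3; auto|]. eapply Rlt_trans; [apply IHHij|apply P3; auto]. }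
    assert (ND : NoDup (map p (seq 0 (S (length L))))).
    { apply NoDup_incr; intros; apply Inc; auto. }
    assert (IC : incl (map p (seq 0 (S (length L)))) L).
    { intros x Hx. apply in_map_iff in Hx. destruct Hx as [i [<- _]].
      destruct (P1 i) as [E|E]; auto. specialize (Lt i); lra. }
    pose proof (NoDup_incl_length ND IC). rewrite length_map, length_seq in H. lia. }
  assert (P5 : exists n, p n = 1 /\ forall j, (j < n)%nat -> p j < 1).
  { destruct P4 as [i Hi]. revert Hi. induction i as [i IH] using (well_founded_induction lt_wf).
    intros Hi. destruct (classic (exists j, (j < i)%nat /\ p j = 1)) as [[j [Hj1 Hj2]]|N].
    - apply (IH j Hj1 Hj2).
    - exists i; split; auto. intros j Hj. destruct (P2 j); auto. exfalso; apply N; eauto. }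
  destruct P5 as [n [Hn Hlt]].
  assert (Hnp : (0 < n)%nat).
  { destruct n; [simpl in Hn; lra|lia]. }
  assert (InL : forall i, (i < n)%nat -> In (p i) L).
  { intros i Hi. destruct (P1 i); auto. specialize (Hlt i Hi); lra. }
  exists n, p. split; [auto|split; [reflexivity|split; [auto|split; [|split]]]].
  - intros i Hi. destruct (P1 i) as [E|E]; [apply HL; auto|rewrite E; apply dy_one].
  - intros i Hi. apply P3, Hlt; auto.
  - intros i Hi. destruct (HL (p i) (InL i Hi)) as [_ [_ [Hfd [k Hk]]]].
    split; auto. exists k. intros t [T1 T2]. apply Hk. split.
    + split; auto. pose proof (P2 (S i)); lra.
    + intros l' Hl' Hlt'. rewrite PS in T2. pose proof (nxt_lb L (p i) l' Hl' Hlt'); lra.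
Qed.

Lemma maxle : forall (L : list R) t, (exists x, In x L /\ x <= t) ->
  exists l, In l L /\ l <= t /\ forall l', In l' L -> l' <= t -> l' <= l.
Proof.
  induction L as [|a L IH]; intros t [x [Hx Ht]]; [contradiction|].
  destruct (classic (exists y, In y L /\ y <= t)) as [E|E].
  - destruct (IH t E) as [l [Hl1 [Hl2 Hl3]]].
    destruct (Rle_dec a t) as [Ha|Ha].
    + destruct (Rle_dec a l).
      * exists l; split; [right; auto|split; auto]. intros l' [<-|H'] H''; auto.
      * exists a; split; [left; auto|split; auto]. intros l' [<-|H'] H''; [lra|]. specialize (Hl3 l' H' H''); lra.
    + exists l; split; [right; auto|split; auto]. intros l' [<-|H'] H''; [lra|auto].
  - destruct Hx as [Hx|Hx]; [subst a|exfalso; apply E; eauto].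
    exists x; split; [left; auto|split; auto]. intros l' [<-|H'] H''; [lra|exfalso; apply E; eauto].
Qed.

Lemma floor_ex : forall L t, In 0 L -> 0 <= t < 1 -> exists l, In l L /\ piece L l t.
Proof.
  intros L t H0 Ht. destruct (maxle L t) as [l [Hl1 [Hl2 Hl3]]]; [exists 0; split; auto; lra|].
  exists l; split; auto. split; [lra|]. intros l' Hl' Hlt. destruct (Rlt_dec t l'); auto.
  specialize (Hl3 l' Hl' ltac:(lra)); lra.
Qed.

Lemma Vel_bij : forall f, Vel f -> bij f.
Proof.
  intros f [H1 [H2 [H3 [H4 _]]]].
  assert (Inj : forall s t, f s = f t -> s = t).
  { intros s t E. destruct (classic (in01 s)) as [Hs|Hs]; destruct (classic (in01 t)) as [Ht|Ht].
    - apply H3; auto.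
    - rewrite (H1 t Ht) in E. exfalso; apply Ht; rewrite <- E; auto.
    - rewrite (H1 s Hs) in E. exfalso; apply Hs; rewrite E; auto.
    - rewrite (H1 s Hs), (H1 t Ht) in E; auto. }
  assert (Sur : forall y, f (inv f y) = y).
  { intros y; apply inv_spec. destruct (classic (in01 y)) as [Hy|Hy].
    - destruct (H4 y Hy) as [t [_ Ht]]; eauto.
    - exists y; apply H1; auto. }
  split; [intros x; apply Inj; auto|auto].
Qed.

Lemma Vel_inv_in01 : forall f y, Vel f -> in01 y -> in01 (inv f y).
Proof.
  intros f y V Hy. pose proof (Vel_bij f V) as [_ B2]. destruct (classic (in01 (inv f y))) as [H|H]; auto.
  destruct V as [H1 _]. rewrite <- (B2 y), (H1 _ H) in Hy. auto.
Qed.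

Lemma good_mul : forall f g Lf Lg, Vel f -> Vel g -> Good f Lf -> Good g Lg ->
  Good (mul f g) (Lf ++ map (inv f) Lg).
Proof.
  intros f g Lf Lg Vf Vg [F0 HF] [G0 HG].
  pose proof (Vel_bij f Vf) as [B1 B2].
  pose proof Vf as [_ [Vf2 _]].
  set (L' := Lf ++ map (inv f) Lg).
  assert (Slope : forall l, In l L' -> 0 <= l < 1 -> exists k, forall t, piece L' l t -> mul f g t = mul f g l + powerRZ 2 k * (t - l)).
  { intros l Hl Hr.
    destruct (floor_ex Lf l F0 Hr) as [l0 [Hl0 Pl0]].
    destruct (HF l0 Hl0) as [_ [R0 [_ [k1 K1]]]].
    assert (Hfl : 0 <= f l < 1) by (apply Vf2; auto).
    destruct (floor_ex Lg (f l) G0 Hfl) as [m0 [Hm0 Pm0]].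
    destruct (HG m0 Hm0) as [_ [_ [_ [k2 K2]]]].
    exists (k1 + k2)%Z. intros t Pt. unfold mul.
    pose proof (powerRZ2_pos k1) as Pk1.
    assert (Pt0 : piece Lf l0 t).
    { destruct Pl0 as [[A1 A2] A3]; destruct Pt as [[C1 C2] C3]. split; [lra|].
      intros l'' H1 H2. apply C3; [apply in_or_app; auto|]. apply A3; auto. }
    assert (Ef : f t = f l + powerRZ 2 k1 * (t - l)).
    { rewrite (K1 t Pt0), (K1 l Pl0); ring. }
    assert (Pft : piece Lg m0 (f t)).
    { destruct Pm0 as [[A1 A2] A3]; destruct Pt as [[C1 C2] C3].
      assert (Hft : 0 <= f t < 1) by (apply Vf2; unfold in01; lra).
      assert (f l <= f t) by (rewrite Ef; assert (0 <= powerRZ 2 k1 * (t - l)) by (apply Rmult_le_pos; lra); lra).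
      split; [lra|]. intros m Hm Hlt. destruct (Rlt_dec (f t) m) as [X|X]; auto. exfalso.
      specialize (A3 m Hm Hlt).
      set (s := l + / powerRZ 2 k1 * (m - f l)).
      assert (Sl : l < s). { unfold s. assert (0 < / powerRZ 2 k1 * (m - f l)) by (apply Rmult_lt_0_compat; [apply Rinv_0_lt_compat|]; lra). lra. }
      assert (St : s <= t).
      { unfold s. apply Rplus_le_reg_l with (- l). apply Rmult_le_reg_l with (powerRZ 2 k1); auto.
        ring_simplify. field_simplify; [|lra]. lra. }
      assert (Ps : piece Lf l0 s).
      { pose proof Pl0 as [[Q1 Q2] _]. destruct Pt0 as [[D1 D2] D3]. split; [lra|]. intros l'' H1 H2; specialize (D3 l'' H1 H2); lra. }
      assert (Fs : f s = m).
      { rewrite (K1 s Ps). replace (f l0) with (f l - powerRZ 2 k1 * (l - l0)) by (rewrite (K1 l Pl0); ring).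
        unfold s. field. lra. }
      assert (Is : inv f m = s) by (rewrite <- Fs; apply B1).
      assert (In s L') by (apply in_or_app; right; rewrite <- Is; apply in_map; auto).
      specialize (C3 s H0 Sl). lra. }
    rewrite (K2 (f t) Pft), (K2 (f l) Pm0), Ef, powerRZ_add by lra. ring. }
  split; [apply in_or_app; auto|].
  intros l Hl. apply in_app_or in Hl. destruct Hl as [Hl|Hl].
  - destruct (HF l Hl) as [D1 [D2 [D3 _]]]. split; auto; split; auto; split.
    + unfold mul. assert (Hfl : 0 <= f l < 1) by (apply Vf2; auto).
      destruct (floor_ex Lg (f l) G0 Hfl) as [m0 [Hm0 Pm0]].
      destruct (HG m0 Hm0) as [E1 [_ [E3 [k2 K2]]]].
      rewrite (K2 _ Pm0). apply dy_add; auto. apply dy_pow2, dy_sub; auto.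
    + apply Slope; auto. apply in_or_app; auto.
  - apply in_map_iff in Hl. destruct Hl as [m [<- Hm]].
    destruct (HG m Hm) as [E1 [E2 [E3 _]]].
    assert (Hr : in01 (inv f m)) by (apply Vel_inv_in01; auto).
    split; [|split; [exact Hr|split]].
    + destruct (floor_ex Lf (inv f m) F0 Hr) as [l0 [Hl0 Pl0]].
      destruct (HF l0 Hl0) as [D1 [_ [D3 [k1 K1]]]].
      pose proof (K1 _ Pl0) as Q. rewrite B2 in Q. pose proof (powerRZ2_pos k1).
      replace (inv f m) with (l0 + powerRZ 2 (- k1) * (m - f l0)).
      * apply dy_add; auto. apply dy_pow2, dy_sub; auto.
      * assert (E : m - f l0 = powerRZ 2 k1 * (inv f m - l0)) by (rewrite Q at 1; ring).
        rewrite powerRZ_neg', E. field. lra.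
    + unfold mul; rewrite B2; auto.
    + apply Slope; [apply in_or_app; right; apply in_map; auto|exact Hr].
Qed.

Lemma Vel_mul : forall f g, Vel f -> Vel g -> Vel (mul f g).
Proof.
  intros f g Vf Vg.
  assert (PW : pw_affine_dyadic (mul f g)).
  { pose proof Vf as [_ [_ [_ [_ Pf]]]]; pose proof Vg as [_ [_ [_ [_ Pg]]]].
    destruct (pw_good f Pf) as [Lf Gf]; destruct (pw_good g Pg) as [Lg Gg].
    eapply good_pw, good_mul; eauto. }
  destruct Vf as [F1 [F2 [F3 [F4 _]]]]; destruct Vg as [G1 [G2 [G3 [G4 _]]]].
  unfold mul; split; [|split; [|split; [|split]]].
  - intros t Ht; rewrite F1, G1; auto.
  - auto.
  - intros s t Hs Ht E. apply F3; auto.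
  - intros u Hu. destruct (G4 u Hu) as [v [Hv1 Hv2]]. destruct (F4 v Hv1) as [w [Hw1 Hw2]].
    exists w; split; auto; rewrite Hw2; auto.
  - exact PW.
Qed.

Lemma Fel_mul : forall f g, Fel f -> Fel g -> Fel (mul f g).
Proof.
  intros f g [Vf Cf] [Vg Cg]; split; [apply Vel_mul; auto|].
  intros t Ht eps He. pose proof Vf as [_ [F2 _]].
  destruct (Cg (f t) (F2 t Ht) eps He) as [d1 [Hd1 D1]].
  destruct (Cf t Ht d1 Hd1) as [d [Hd D]].
  exists d; split; auto. intros s Hs Hst. unfold mul. apply D1; auto.
Qed.

Lemma Tel_mul : forall f g, Tel f -> Tel g -> Tel (mul f g).
Proof.
  intros f g [Vf Cf] [Vg Cg]; split; [apply Vel_mul; auto|].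
  intros t Ht eps He. pose proof Vf as [_ [F2 _]].
  destruct (Cg (f t) (F2 t Ht) eps He) as [d1 [Hd1 D1]].
  destruct (Cf t Ht d1 Hd1) as [d [Hd D]].
  exists d; split; auto. intros s Hs Hst. unfold mul. apply D1; auto.
Qed.

Inductive Gen : (R -> R) -> Prop :=
| G_x0 : Gen x0
| G_x0i : Gen x0i
| G_x1 : Gen x1
| G_x1i : Gen x1i
| G_one : Gen one
| G_mul : forall f g, Gen f -> Gen g -> Gen (mul f g).

Lemma Gen_all : forall f, Gen f -> Vel f /\ Fel f /\ Tel f.
Proof.
  intros f G; induction G.
  - exact x0_all. - exact x0i_all. - exact x1_all. - exact x1i_all. - exact one_all.
  - destruct IHG1 as [A1 [B1 C1]]; destruct IHG2 as [A2 [B2 C2]].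
    split; [apply Vel_mul|split; [apply Fel_mul|apply Tel_mul]]; auto.
Qed.
Lemma Gen_V : forall f, Gen f -> Vel f. Proof. intros f G; apply Gen_all; auto. Qed.
Lemma Gen_F : forall f, Gen f -> Fel f. Proof. intros f G; apply Gen_all; auto. Qed.
Lemma Gen_T : forall f, Gen f -> Tel f. Proof. intros f G; apply Gen_all; auto. Qed.
Lemma Gen_bij : forall f, Gen f -> bij f. Proof. intros f G; apply Vel_bij, Gen_V; auto. Qed.

Lemma Gen_inv : forall f, Gen f -> Gen (inv f).
Proof.
  intros f G; induction G.
  - rewrite inv_x0; constructor. - rewrite inv_x0i; constructor.
  - rewrite inv_x1; constructor. - rewrite inv_x1i; constructor.
  - rewrite inv_one; constructor.
  - rewrite inv_mul by (apply Gen_bij; auto). constructor; auto.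
Qed.

Lemma Gen_npow : forall f n, Gen f -> Gen (npow f n).
Proof. intros f n G; induction n; [constructor|]. change (Gen (mul (npow f n) f)); constructor; auto. Qed.

Lemma Gen_zpow : forall f j, Gen f -> Gen (zpow f j).
Proof.
  intros f j G. destruct j; simpl; [constructor|apply Gen_npow; auto|apply Gen_npow, Gen_inv; auto].
Qed.

Lemma Gen_a : Gen a. Proof. unfold a; constructor; constructor. Qed.
Lemma Gen_b : Gen b. Proof. unfold b; rewrite inv_x0, inv_x1; repeat constructor. Qed.
Lemma Gen_bk : forall k, Gen (bk k).
Proof. intros; unfold bk; constructor; [constructor|]; auto using Gen_zpow, Gen_a, Gen_b. Qed.

Lemma bij_a : bij a. Proof. apply Gen_bij, Gen_a. Qed.
Lemma bij_bk : forall k, bij (bk k). Proof. intros; apply Gen_bij, Gen_bk. Qed.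

Lemma gen2_npow : forall f n, gen2 a b f -> gen2 a b (npow f n).
Proof. intros f n G; induction n; [constructor|]. change (gen2 a b (mul (npow f n) f)); constructor; auto. Qed.
Lemma gen2_zpow : forall f j, gen2 a b f -> gen2 a b (zpow f j).
Proof. intros f j G. destruct j; simpl; [constructor|apply gen2_npow; auto|apply gen2_npow; constructor; auto]. Qed.
Lemma gen2_bk : forall k, gen2 a b (bk k).
Proof. intros; unfold bk; constructor; [constructor|]; apply gen2_zpow || constructor; constructor. Qed.

Lemma INR_lt_pow2 : forall n, INR n < 2 ^ n.
Proof.
  induction n; [simpl; lra|]. rewrite S_INR. simpl pow. assert (1 <= 2 ^ n) by (apply pow_R1_Rle; lra). lra.
Qed.
Lemma pow2_gt : forall x, exists n, x < 2 ^ n.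
Proof.
  intros x. destruct (archimed x) as [H1 _].
  destruct (Z_le_gt_dec (up x) 0) as [L|L].
  - exists 0%nat; simpl. apply IZR_le in L. lra.
  - exists (Z.to_nat (up x)). pose proof (INR_lt_pow2 (Z.to_nat (up x))).
    rewrite INR_IZR_INZ, Z2Nat.id in H by lia. lra.
Qed.

Lemma npow_add : forall f m n t, npow f (m + n) t = npow f n (npow f m t).
Proof. intros f m n t; induction n; simpl; [rewrite Nat.add_0_r; reflexivity|]. rewrite Nat.add_succ_r, npow_S, IHn; reflexivity. Qed.

Lemma zpow_fix : forall f j t, bij f -> f t = t -> zpow f j t = t.
Proof.
  intros f j t Hf E. pattern j; apply Z.peano_ind.
  - reflexivity.
  - intros x IH; rewrite zpow_succ, IH; auto.
  - intros x IH; rewrite zpow_pred, IH; auto. rewrite <- E at 1. apply Hf.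
Qed.

Lemma x0_out : forall t, ~ in01 t -> x0 t = t.
Proof. intros t H; apply not_in01 in H; unfold x0; split_g; lra. Qed.
Lemma x0_fix : forall u, 0 <= u < 1 -> x0 u = u -> u = 0.
Proof. intros u H E; revert E; unfold x0; split_g; lra. Qed.
Lemma x0_0 : x0 0 = 0. Proof. unfold x0; split_g; lra. Qed.

Lemma x0_near_n : forall n s, 0 <= s -> 2 ^ n * s < 1/4 -> npow x0 n s = 2 ^ n * s.
Proof.
  induction n; intros s H1 H2; [rewrite npow_0; simpl; lra|].
  rewrite npow_S. simpl pow in *. rewrite IHn; auto; [|lra]. unfold x0; split_g; try lra.
  exfalso. assert (0 <= 2 ^ n * s) by (apply Rmult_le_pos; auto; left; apply two_pow_pos). lra.
Qed.
Lemma x0i_near_n : forall n s, 0 <= s < 1/2 -> npow x0i n s = s / 2 ^ n.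
Proof.
  induction n; intros s H; [rewrite npow_0; simpl; field|]. rewrite npow_S. simpl pow. rewrite IHn; auto. pose proof (two_pow_pos n).
  assert (s / 2 ^ n <= s). { unfold Rdiv; rewrite <- (Rmult_1_r s) at 2. apply Rmult_le_compat_l; [lra|].
    rewrite <- Rinv_1. apply Rinv_le_contravar; [lra|apply pow_R1_Rle; lra]. }
  assert (0 <= s / 2 ^ n) by (unfold Rdiv; apply Rmult_le_pos; [lra|left; apply Rinv_0_lt_compat; auto]).
  unfold x0i; split_g; try lra. field; lra.
Qed.

Lemma X_near0 : forall j, exists d, 0 < d /\ forall s, 0 <= s < d -> zpow x0 j s = powerRZ 2 j * s.
Proof.
  intros j. destruct (Z_cases j) as [[n ->]|[n ->]].
  - exists (/ 4 / 2 ^ n). pose proof (two_pow_pos n). split; [apply Rdiv_lt_0_compat; lra|].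
    intros s Hs. rewrite zpow_nat, <- pow_powerRZ. apply x0_near_n; [lra|].
    destruct Hs as [_ Hs]. apply Rmult_lt_compat_l with (r := 2 ^ n) in Hs; auto.
    replace (2 ^ n * (/ 4 / 2 ^ n)) with (1/4) in Hs by (field; lra). lra.
  - exists (1/2); split; [lra|]. intros s Hs. rewrite zpow_negnat, inv_x0, x0i_near_n by auto.
    rewrite powerRZ_neg', <- pow_powerRZ. field. pose proof (two_pow_pos (S n)); lra.
Qed.

Lemma x0i_step : forall t, 0 <= t < 1 -> 0 <= x0i t < 1 /\ x0i t <= t /\ Rmin (2 * (1 - t)) (1/2) <= 1 - x0i t.
Proof.
  intros t H. unfold Rmin; destruct (Rle_dec (2 * (1 - t)) (1 / 2)); unfold x0i; split_g; lra.
Qed.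

Lemma x0i_iter : forall n t, 0 <= t < 1 -> 0 <= npow x0i n t < 1 /\ Rmin (2 ^ n * (1 - t)) (1/2) <= 1 - npow x0i n t.
Proof.
  induction n; intros t H.
  - rewrite npow_0; simpl pow. split; [lra|]. unfold Rmin; destruct Rle_dec; lra.
  - rewrite npow_S; simpl pow. destruct (IHn t H) as [A B]. destruct (x0i_step _ A) as [C [D E]]. split; auto.
    revert B E. unfold Rmin. repeat match goal with |- context [Rle_dec ?a ?b] => destruct (Rle_dec a b) end; intros; lra.
Qed.

Lemma x0i_half : forall n u, 0 <= u <= 1/2 -> 0 <= npow x0i n u <= u / 2 ^ n.
Proof.
  induction n; intros u H; [rewrite npow_0; simpl pow; split; [lra|]; right; field|]. rewrite npow_S; simpl pow.
  destruct (IHn u H) as [A B]. pose proof (two_pow_pos n).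
  assert (u / 2 ^ n <= u). { unfold Rdiv; rewrite <- (Rmult_1_r u) at 2. apply Rmult_le_compat_l; [lra|].
    rewrite <- Rinv_1. apply Rinv_le_contravar; [lra|apply pow_R1_Rle; lra]. }
  assert (E : u / (2 * 2 ^ n) = (u / 2 ^ n) / 2) by (field; lra). rewrite E.
  set (v := npow x0i n u) in *. set (w := u / 2 ^ n) in *. unfold x0i; split_g; lra.
Qed.

Lemma X_escape : forall t, 0 <= t < 1 -> forall eps, 0 < eps -> exists n, 0 <= npow x0i n t < eps.
Proof.
  intros t Ht eps He. destruct (pow2_gt (/ (2 * (1 - t)))) as [n1 Hn1].
  destruct (pow2_gt (/ eps)) as [n2 Hn2].
  destruct (x0i_iter n1 t Ht) as [A B].
  assert (U : npow x0i n1 t <= 1/2).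
  { assert (1/2 <= 2 ^ n1 * (1 - t)).
    { apply Rmult_lt_compat_r with (r := 2 * (1 - t)) in Hn1; [|lra].
      rewrite Rinv_l in Hn1 by lra. lra. }
    revert B; unfold Rmin; destruct Rle_dec; intros; lra. }
  exists (n1 + n2)%nat. rewrite npow_add. destruct (x0i_half n2 (npow x0i n1 t)) as [C D]; [lra|].
  split; auto. pose proof (two_pow_pos n2).
  assert (npow x0i n1 t / 2 ^ n2 <= 1 / 2 ^ n2) by (unfold Rdiv; apply Rmult_le_compat_r; [left; apply Rinv_0_lt_compat|]; lra).
  assert (1 / 2 ^ n2 < eps).
  { apply Rmult_lt_reg_r with (2 ^ n2); auto. field_simplify; [|lra].
    apply Rmult_lt_compat_l with (r := eps) in Hn2; auto. rewrite Rinv_r in Hn2 by lra. lra. }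
  lra.
Qed.

Lemma RA : forall f x, Vel f -> 0 <= x < 1 -> exists eps, 0 < eps /\ exists e,
  forall t, x <= t < x + eps -> f t = f x + powerRZ 2 e * (t - x).
Proof.
  intros f x [_ [_ [_ [_ [n [p [Hn [H0 [Hnn [Hd [Hinc Hsl]]]]]]]]]]] Hx.
  assert (Ex : forall m, (m <= n)%nat -> x < p m -> exists i, (i < m)%nat /\ p i <= x < p (S i)).
  { induction m; intros Hm Hlt; [lra|].
    destruct (Rle_dec (p m) x).
    - exists m; split; [lia|lra].
    - destruct (IHm ltac:(lia) ltac:(lra)) as [i [Hi1 Hi2]]. exists i; split; [lia|auto]. }
  destruct (Ex n (le_n n) ltac:(lra)) as [i [Hi [Hi1 Hi2]]].
  destruct (Hsl i Hi) as [_ [e He]].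
  exists (p (S i) - x); split; [lra|]. exists e. intros t Ht.
  rewrite (He t) by lra. rewrite (He x) by lra. ring.
Qed.

Lemma L1 : forall y, Vel y -> mul y x0 = mul x0 y -> exists j, y = zpow x0 j.
Proof.
  intros y Vy Hc.
  assert (C : forall t, x0 (y t) = y (x0 t)).
  { intros t; exact (f_equal (fun F => F t) Hc). }
  pose proof (Vel_bij y Vy) as By.
  assert (Y0 : y 0 = 0).
  { apply x0_fix. { destruct Vy as [_ [V2 _]]. apply V2; unfold in01; lra. }
    rewrite C, x0_0; reflexivity. }
  destruct (RA y 0 Vy ltac:(lra)) as [eps [He [e Ye]]].
  exists e. destruct (X_near0 e) as [d [Hd Xd]].
  apply functional_extensionality; intros t.
  destruct (classic (in01 t)) as [Ht|Ht].
  - destruct (X_escape t Ht (Rmin eps d)) as [n [Hn1 Hn2]]; [apply Rmin_glb_lt; auto|].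
    pose proof (Rmin_l eps d); pose proof (Rmin_r eps d).
    set (s := npow x0i n t) in *.
    assert (Ts : t = zpow x0 (Z.of_nat n) s).
    { rewrite zpow_nat. unfold s. rewrite <- inv_x0. symmetry; apply npow_inv_cancel, bij_x0. }
    rewrite Ts. rewrite (zpow_comm y x0); [|auto|apply bij_x0|intros; rewrite C; auto].
    rewrite (Ye s) by lra. rewrite Y0, Rplus_0_l, Rminus_0_r, <- (Xd s) by lra.
    rewrite <- !zpow_add by apply bij_x0. rewrite Z.add_comm; reflexivity.
  - destruct Vy as [V1 _]. rewrite V1 by auto. symmetry; apply zpow_fix; [apply bij_x0|apply x0_out; auto].
Qed.

Definition Ib (t : R) : Prop := 1/2 < t < 7/8.

Lemma bexp_out : forall t, ~ Ib t -> bexp t = t.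
Proof. intros t H; unfold Ib in H; unfold bexp; split_g; try lra; exfalso; apply H; lra. Qed.
Lemma binv_out : forall t, ~ Ib t -> binv t = t.
Proof. intros t H; unfold Ib in H; unfold binv; split_g; try lra; exfalso; apply H; lra. Qed.
Lemma bexp_in : forall t, Ib t -> Ib (bexp t) /\ t < bexp t.
Proof. unfold Ib; intros t H; unfold bexp; split_g; lra. Qed.
Lemma binv_in : forall t, Ib t -> Ib (binv t) /\ binv t < t.
Proof. unfold Ib; intros t H; unfold binv; split_g; lra. Qed.

Lemma zb_pos : forall n t, Ib t -> Ib (npow bexp n t) /\ t <= npow bexp n t /\ (n <> 0%nat -> t < npow bexp n t).
Proof.
  induction n; intros t H; [rewrite npow_0; split; [auto|split; [lra|intros C; lia]]|].
  rewrite npow_S. destruct (IHn t H) as [A [B _]]. destruct (bexp_in _ A) as [C D].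
  split; auto; split; [lra|intros; lra].
Qed.
Lemma zb_neg : forall n t, Ib t -> Ib (npow binv n t) /\ npow binv n t <= t /\ (n <> 0%nat -> npow binv n t < t).
Proof.
  induction n; intros t H; [rewrite npow_0; split; [auto|split; [lra|intros C; lia]]|].
  rewrite npow_S. destruct (IHn t H) as [A [B _]]. destruct (binv_in _ A) as [C D].
  split; auto; split; [lra|intros; lra].
Qed.

Lemma B_fix : forall m t, ~ Ib t -> zpow b m t = t.
Proof. intros; apply zpow_fix; [apply bij_b|rewrite b_eq; apply bexp_out; auto]. Qed.

Lemma B_in : forall m t, Ib t -> Ib (zpow b m t) /\ (m <> 0%Z -> zpow b m t <> t).
Proof.
  intros m t H. destruct (Z_cases m) as [[n ->]|[n ->]].
  - rewrite zpow_nat, b_eq. destruct (zb_pos n t H) as [A [_ C]]. split; auto.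
    intros Hm. assert (n <> 0%nat) by (intro; subst; apply Hm; reflexivity). specialize (C H0); lra.
  - rewrite zpow_negnat, inv_b. destruct (zb_neg (S n) t H) as [A [_ C]]. split; auto.
    intros _. assert (S n <> 0%nat) by lia. specialize (C H0); lra.
Qed.

Lemma bexp_near_n : forall n s, 1/2 <= s -> 2 ^ n * (s - 1/2) < 1/8 -> npow bexp n s = 1/2 + 2 ^ n * (s - 1/2).
Proof.
  induction n; intros s H1 H2; [rewrite npow_0; simpl pow; lra|].
  rewrite npow_S. simpl pow in *. rewrite IHn; auto; [|lra].
  assert (0 <= 2 ^ n * (s - 1/2)) by (apply Rmult_le_pos; [left; apply two_pow_pos|lra]).
  replace (2 * 2 ^ n * (s - 1/2)) with (2 * (2 ^ n * (s - 1/2))) in * by ring.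
  set (w := 2 ^ n * (s - 1/2)) in *. unfold bexp; split_g; lra.
Qed.
Lemma binv_near_n : forall n s, 1/2 <= s < 3/4 -> npow binv n s = 1/2 + (s - 1/2) / 2 ^ n.
Proof.
  induction n; intros s H; [rewrite npow_0; simpl pow; field|]. rewrite npow_S. simpl pow. rewrite IHn; auto.
  pose proof (two_pow_pos n).
  assert (0 <= (s - 1/2) / 2 ^ n) by (unfold Rdiv; apply Rmult_le_pos; [lra|left; apply Rinv_0_lt_compat; auto]).
  assert ((s - 1/2) / 2 ^ n <= s - 1/2).
  { unfold Rdiv; rewrite <- (Rmult_1_r (s - 1/2)) at 2. apply Rmult_le_compat_l; [lra|].
    rewrite <- Rinv_1. apply Rinv_le_contravar; [lra|apply pow_R1_Rle; lra]. }
  assert (E : (s - 1/2) / (2 * 2 ^ n) = ((s - 1/2) / 2 ^ n) / 2) by (field; lra). rewrite E.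
  set (w := (s - 1/2) / 2 ^ n) in *. unfold binv; split_g; lra.
Qed.

Lemma B_near : forall m, exists d, 0 < d /\ forall s, 1/2 <= s < 1/2 + d -> zpow b m s = 1/2 + powerRZ 2 m * (s - 1/2).
Proof.
  intros m. destruct (Z_cases m) as [[n ->]|[n ->]].
  - exists (/ 8 / 2 ^ n). pose proof (two_pow_pos n). split; [apply Rdiv_lt_0_compat; lra|].
    intros s Hs. rewrite zpow_nat, b_eq, <- pow_powerRZ. apply bexp_near_n; [lra|].
    destruct Hs as [_ Hs]. apply Rplus_lt_compat_r with (r := - (1/2)) in Hs.
    apply Rmult_lt_compat_l with (r := 2 ^ n) in Hs; auto.
    replace (2 ^ n * (1/2 + / 8 / 2 ^ n + - (1/2))) with (1/8) in Hs by (field; lra). lra.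
  - exists (1/4); split; [lra|]. intros s Hs. rewrite zpow_negnat, inv_b, binv_near_n by lra.
    rewrite powerRZ_neg', <- pow_powerRZ. field. pose proof (two_pow_pos (S n)); lra.
Qed.

Lemma binv_iter : forall n t, Ib t -> Rmin (2 ^ n * (7/8 - t)) (1/4) <= 7/8 - npow binv n t.
Proof.
  induction n; intros t H.
  - rewrite npow_0; simpl pow. unfold Rmin; destruct Rle_dec; lra.
  - rewrite npow_S; simpl pow. specialize (IHn t H). destruct (zb_neg n t H) as [A _].
    assert (Rmin (2 * (7/8 - npow binv n t)) (1/4) <= 7/8 - binv (npow binv n t)).
    { clear IHn. set (v := npow binv n t) in *. unfold Ib in A. unfold Rmin; destruct Rle_dec; unfold binv; split_g; lra. }
    revert IHn H0. replace (2 * 2 ^ n * (7/8 - t)) with (2 * (2 ^ n * (7/8 - t))) by ring.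
    unfold Rmin. repeat match goal with |- context [Rle_dec ?a ?b] => destruct (Rle_dec a b) end; intros; lra.
Qed.

Lemma B_escape : forall t, Ib t -> forall eps, 0 < eps -> exists n, Ib (npow binv n t) /\ npow binv n t < 1/2 + eps.
Proof.
  intros t Ht eps He. destruct (pow2_gt (/ (4 * (7/8 - t)))) as [n1 Hn1].
  destruct (pow2_gt (/ eps)) as [n2 Hn2].
  pose proof (binv_iter n1 t Ht) as B. destruct (zb_neg n1 t Ht) as [A _].
  assert (U : npow binv n1 t <= 5/8).
  { unfold Ib in Ht. assert (1/4 <= 2 ^ n1 * (7/8 - t)).
    { apply Rmult_lt_compat_r with (r := 4 * (7/8 - t)) in Hn1; [|lra].
      rewrite Rinv_l in Hn1 by lra. lra. }
    revert B; unfold Rmin; destruct Rle_dec; intros; lra. }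
  exists (n1 + n2)%nat. rewrite npow_add. destruct (zb_neg n2 _ A) as [C _]. split; auto.
  unfold Ib in A. rewrite binv_near_n by lra. pose proof (two_pow_pos n2).
  assert ((npow binv n1 t - 1/2) / 2 ^ n2 <= (1/8) / 2 ^ n2) by (unfold Rdiv; apply Rmult_le_compat_r; [left; apply Rinv_0_lt_compat|]; lra).
  assert ((1/8) / 2 ^ n2 < eps).
  { apply Rmult_lt_reg_r with (2 ^ n2); auto. field_simplify; [|lra].
    apply Rmult_lt_compat_l with (r := eps) in Hn2; auto. rewrite Rinv_r in Hn2 by lra. lra. }
  lra.
Qed.

Lemma L2' : forall h, Vel h -> (forall t, b (h t) = h (b t)) ->
  h (1/2) = 1/2 /\ exists m, forall t, Ib t -> h t = zpow b m t.
Proof.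
  intros h Vh C. pose proof (Vel_bij h Vh) as Bh.
  assert (Pres : forall t, Ib t -> Ib (h t)).
  { intros t Ht. apply NNPP; intros N. rewrite b_eq in C.
    assert (E : h (bexp t) = h t) by (rewrite <- C, bexp_out; auto).
    apply (bij_inj h) in E; auto. destruct (bexp_in t Ht); lra. }
  assert (Fh : ~ Ib (h (1/2))).
  { intros N. rewrite b_eq in C. destruct (bexp_in _ N) as [_ D].
    rewrite C, bexp_out in D; [lra|unfold Ib; lra]. }
  assert (R0 : 0 <= h (1/2) < 1) by (destruct Vh as [_ [V2 _]]; apply V2; unfold in01; lra).
  destruct (RA h (1/2) Vh ltac:(lra)) as [eps [He [e He']]].
  pose proof (powerRZ2_pos e) as Pe.
  assert (H12 : h (1/2) = 1/2).
  { set (c := h (1/2)) in *. unfold Ib in Fh.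
    destruct (Rlt_dec c (1/2)) as [L|L].
    - assert (Q : 0 < (1/2 - c) / powerRZ 2 e / 2).
      { apply Rmult_lt_0_compat; [|lra]. apply Rdiv_lt_0_compat; lra. }
      set (q := (1/2 - c) / powerRZ 2 e / 2) in *.
      assert (Eq : powerRZ 2 e * q < 1/2 - c) by (unfold q; field_simplify; lra).
      pose proof (Rmin_l (eps / 2) (Rmin (1/8) q)).
      pose proof (Rmin_r (eps / 2) (Rmin (1/8) q)).
      pose proof (Rmin_l (1/8) q). pose proof (Rmin_r (1/8) q).
      assert (Hd : 0 < Rmin (eps / 2) (Rmin (1/8) q)) by (repeat apply Rmin_glb_lt; lra).
      set (d := Rmin (eps / 2) (Rmin (1/8) q)) in *.
      assert (I : Ib (1/2 + d)) by (unfold Ib; lra).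
      specialize (Pres _ I). rewrite He' in Pres by lra. unfold Ib in Pres.
      assert (powerRZ 2 e * d < 1/2 - c).
      { apply Rle_lt_trans with (powerRZ 2 e * q); auto.
        apply Rmult_le_compat_l; lra. }
      replace (1/2 + d - 1/2) with d in Pres by ring. lra.
    - assert (c = 1/2 \/ 7/8 <= c) as [|G] by lra; auto. exfalso.
      pose proof (Rmin_l (eps / 2) (1/8)); pose proof (Rmin_r (eps / 2) (1/8)).
      assert (Hd : 0 < Rmin (eps / 2) (1/8)) by (apply Rmin_glb_lt; lra).
      set (d := Rmin (eps / 2) (1/8)) in *.
      assert (I : Ib (1/2 + d)) by (unfold Ib; lra).
      specialize (Pres _ I). rewrite He' in Pres by lra. unfold Ib in Pres.
      assert (0 < powerRZ 2 e * (1/2 + d - 1/2)) by (apply Rmult_lt_0_compat; lra). lra. }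
  split; auto. exists e. destruct (B_near e) as [d [Hd Bd]].
  intros t Ht. destruct (B_escape t Ht (Rmin eps d)) as [n [Hn1 Hn2]]; [apply Rmin_glb_lt; auto|].
  pose proof (Rmin_l eps d); pose proof (Rmin_r eps d).
  set (s := npow binv n t) in *.
  assert (Ts : t = zpow b (Z.of_nat n) s).
  { rewrite zpow_nat. unfold s. rewrite <- inv_b. symmetry; apply npow_inv_cancel, bij_b. }
  unfold Ib in Hn1.
  rewrite Ts. rewrite (zpow_comm h b); [|auto|apply bij_b|intros; rewrite C; auto].
  rewrite (He' s) by lra. rewrite H12, <- (Bd s) by lra.
  rewrite <- !zpow_add by apply bij_b. rewrite Z.add_comm; reflexivity.
Qed.

Lemma x0_incr : forall s t, s < t -> x0 s < x0 t. Proof. intros s t H; ev x0 s; ev x0 t; lra. Qed.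
Lemma x0i_incr : forall s t, s < t -> x0i s < x0i t. Proof. intros s t H; ev x0i s; ev x0i t; lra. Qed.
Lemma x0_ge : forall t, t <= x0 t. Proof. intros t; unfold x0; split_g; lra. Qed.
Lemma x0i_le : forall t, x0i t <= t. Proof. intros t; unfold x0i; split_g; lra. Qed.
Lemma x0_in01 : forall t, in01 t -> in01 (x0 t). Proof. unfold in01; intros t H; unfold x0; split_g; lra. Qed.
Lemma x0i_in01 : forall t, in01 t -> in01 (x0i t). Proof. unfold in01; intros t H; unfold x0i; split_g; lra. Qed.

Lemma a_eq : forall t, a t = x0 (x0 t). Proof. reflexivity. Qed.
Lemma ainv_eq : forall t, inv a t = x0i (x0i t).
Proof. intros t; unfold a; rewrite inv_mul by apply bij_x0. rewrite inv_x0; reflexivity. Qed.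

Lemma a_incr : forall s t, s < t -> a s < a t. Proof. intros; rewrite !a_eq; apply x0_incr, x0_incr; auto. Qed.
Lemma ainv_incr : forall s t, s < t -> inv a s < inv a t. Proof. intros; rewrite !ainv_eq; apply x0i_incr, x0i_incr; auto. Qed.
Lemma a_ge : forall t, t <= a t. Proof. intros; rewrite a_eq. pose proof (x0_ge t); pose proof (x0_ge (x0 t)); lra. Qed.
Lemma ainv_le : forall t, inv a t <= t. Proof. intros; rewrite ainv_eq. pose proof (x0i_le t); pose proof (x0i_le (x0i t)); lra. Qed.
Lemma a_half : a (1/2) = 7/8. Proof. rewrite a_eq; ev x0 (1/2); ev x0 u; lra. Qed.
Lemma ainv_78 : inv a (7/8) = 1/2. Proof. rewrite ainv_eq; ev x0i (7/8); ev x0i u; lra. Qed.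
Lemma a_0 : a 0 = 0. Proof. rewrite a_eq, x0_0, x0_0; reflexivity. Qed.

Definition A (j : Z) := zpow a j.

Lemma A_incr : forall j s t, s < t -> A j s < A j t.
Proof.
  intros j; unfold A; pattern j; apply Z.peano_ind.
  - intros s t H; exact H.
  - intros x IH s t H. rewrite !zpow_succ by apply bij_a. apply a_incr; auto.
  - intros x IH s t H. rewrite !zpow_pred by apply bij_a. apply ainv_incr; auto.
Qed.
Lemma A_le : forall j s t, s <= t -> A j s <= A j t.
Proof. intros j s t [H|H]; [left; apply A_incr; auto|subst; lra]. Qed.
Lemma A_0 : forall j, A j 0 = 0. Proof. intros; apply zpow_fix; [apply bij_a|apply a_0]. Qed.
Lemma A_out : forall j t, ~ in01 t -> A j t = t.
Proof. intros j t H; apply zpow_fix; [apply bij_a|rewrite a_eq, (x0_out t H), (x0_out t H); auto]. Qed.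
Lemma A_in01 : forall j t, in01 t -> in01 (A j t).
Proof.
  intros j; unfold A; pattern j; apply Z.peano_ind.
  - intros t H; exact H.
  - intros x IH t H. rewrite zpow_succ by apply bij_a. rewrite a_eq; apply x0_in01, x0_in01; auto.
  - intros x IH t H. rewrite zpow_pred by apply bij_a. rewrite ainv_eq; apply x0i_in01, x0i_in01; auto.
Qed.
Lemma A_add : forall i j t, A (i + j) t = A j (A i t). Proof. intros; apply zpow_add, bij_a. Qed.
Lemma A_cancel : forall j t, A (- j) (A j t) = t. Proof. intros; apply zpow_cancel, bij_a. Qed.
Lemma A_cancel' : forall j t, A j (A (- j) t) = t. Proof. intros; apply zpow_cancel', bij_a. Qed.
Lemma A_inj : forall j s t, A j s = A j t -> s = t.
Proof. intros j s t E; rewrite <- (A_cancel j s), E, A_cancel; auto. Qed.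

Definition J0 (s : R) : Prop := 1/2 <= s < 7/8.

Lemma O1p : forall n s, J0 s -> 7/8 <= A (Z.of_nat (S n)) s.
Proof.
  intros n s [H1 H2]. unfold A; rewrite zpow_nat.
  assert (G : forall m, a s <= npow a (S m) s).
  { induction m; [rewrite npow_S, npow_0; lra|]. rewrite (npow_S a (S m)). pose proof (a_ge (npow a (S m) s)); lra. }
  pose proof (G n). assert (a (1/2) <= a s) by (destruct H1 as [H1|H1]; [left; apply a_incr; auto|subst; lra]).
  rewrite a_half in H0; lra.
Qed.
Lemma O1n : forall n s, J0 s -> A (- Z.of_nat (S n)) s < 1/2.
Proof.
  intros n s [H1 H2]. unfold A; rewrite zpow_negnat.
  assert (G : forall m, npow (inv a) (S m) s <= inv a s).
  { induction m; [rewrite npow_S, npow_0; lra|]. rewrite (npow_S (inv a) (S m)). pose proof (ainv_le (npow (inv a) (S m) s)); lra. }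
  pose proof (G n). pose proof (ainv_incr _ _ H2). rewrite ainv_78 in H0; lra.
Qed.

Lemma O1 : forall j s, J0 s -> j <> 0%Z -> ~ J0 (A j s).
Proof.
  intros j s H Hj N. destruct (Z_cases j) as [[[|n] ->]|[n ->]].
  - apply Hj; reflexivity.
  - pose proof (O1p n s H). destruct N; lra.
  - pose proof (O1n n s H). destruct N; lra.
Qed.

Lemma J0_unique : forall k l t, J0 (A (- k) t) -> J0 (A (- l) t) -> k = l.
Proof.
  intros k l t Hk Hl. destruct (Z.eq_dec (k - l) 0) as [E|E]; [lia|].
  exfalso. apply (O1 (k - l) _ Hk E). rewrite <- A_add. replace (- k + (k - l))%Z with (- l)%Z by lia. auto.
Qed.

Lemma a_escape : forall t, 0 < t < 1 -> exists n, 1/2 <= npow a n t.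
Proof.
  intros t Ht.
  assert (G : forall n, 0 <= npow a n t < 1 /\ Rmin (2 ^ n * t) (1/2) <= npow a n t).
  { induction n.
    - rewrite npow_0; simpl pow. split; [lra|]. unfold Rmin; destruct Rle_dec; lra.
    - rewrite npow_S; simpl pow. destruct IHn as [A1 A2].
      set (v := npow a n t) in *.
      assert (B1 : Rmin (2 * v) (1/2) <= x0 v) by (unfold Rmin; destruct Rle_dec; unfold x0; split_g; lra).
      pose proof (x0_ge (x0 v)). pose proof (x0_in01 v A1). pose proof (x0_in01 _ H0).
      rewrite a_eq. unfold in01 in *. split; [lra|].
      revert A2 B1. replace (2 * 2 ^ n * t) with (2 * (2 ^ n * t)) by ring.
      unfold Rmin. repeat match goal with |- context [Rle_dec ?a ?b] => destruct (Rle_dec a b) end; intros; lra. }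
  destruct (pow2_gt (/ (2 * t))) as [n Hn]. exists n. destruct (G n) as [_ G2].
  assert (1/2 <= 2 ^ n * t).
  { apply Rmult_lt_compat_r with (r := 2 * t) in Hn; [|lra]. rewrite Rinv_l in Hn by lra. lra. }
  revert G2; unfold Rmin; destruct Rle_dec; intros; lra.
Qed.

Lemma ainv_escape : forall t, 0 <= t < 1 -> exists n, npow (inv a) n t < 7/8.
Proof.
  intros t Ht.
  assert (G : forall n, 0 <= npow (inv a) n t < 1 /\ Rmin (2 ^ n * (1 - t)) (1/2) <= 1 - npow (inv a) n t).
  { induction n.
    - rewrite npow_0; simpl pow. split; [lra|]. unfold Rmin; destruct Rle_dec; lra.
    - rewrite npow_S; simpl pow. destruct IHn as [A1 A2].
      set (v := npow (inv a) n t) in *.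
      destruct (x0i_step v A1) as [B1 [B2 B3]].
      pose proof (x0i_le (x0i v)). pose proof (x0i_in01 _ B1).
      rewrite ainv_eq. unfold in01 in *. split; [lra|].
      revert A2 B3. replace (2 * 2 ^ n * (1 - t)) with (2 * (2 ^ n * (1 - t))) by ring.
      unfold Rmin. repeat match goal with |- context [Rle_dec ?a ?b] => destruct (Rle_dec a b) end; intros; lra. }
  destruct (pow2_gt (/ (4 * (1 - t)))) as [n Hn]. exists n. destruct (G n) as [_ G2].
  assert (1/4 <= 2 ^ n * (1 - t)).
  { apply Rmult_lt_compat_r with (r := 4 * (1 - t)) in Hn; [|lra]. rewrite Rinv_l in Hn by lra. lra. }
  revert G2; unfold Rmin; destruct Rle_dec; intros; lra.
Qed.

Lemma Z_search : forall (P : Z -> Prop) k0 (d : nat), ~ P k0 -> P (k0 + Z.of_nat d)%Z -> exists k, P k /\ ~ P (k - 1)%Z.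
Proof.
  intros P k0 d; induction d; intros N H.
  - rewrite Z.add_0_r in H; contradiction.
  - destruct (classic (P (k0 + Z.of_nat d)%Z)) as [E|E]; auto.
    exists (k0 + Z.of_nat (S d))%Z; split; auto. replace (k0 + Z.of_nat (S d) - 1)%Z with (k0 + Z.of_nat d)%Z by lia; auto.
Qed.

Lemma O2 : forall t, 0 < t < 1 -> exists k, J0 (A (- k) t).
Proof.
  intros t Ht. destruct (a_escape t Ht) as [n2 H2]. destruct (ainv_escape t ltac:(lra)) as [n1 H1].
  set (P := fun k => A (- k) t < 7/8).
  assert (P1 : P (Z.of_nat n1)) by (unfold P, A; rewrite zpow_negnat; auto).
  assert (P2 : ~ P (- Z.of_nat (S n2))%Z).
  { unfold P, A. rewrite Z.opp_involutive, zpow_nat, npow_S.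
    assert (a (1/2) <= a (npow a n2 t)) by (destruct H2 as [H2|H2]; [left; apply a_incr; auto|rewrite <- H2; lra]).
    rewrite a_half in H; lra. }
  destruct (Z_search P (- Z.of_nat (S n2)) (n1 + S n2) P2) as [k [K1 K2]].
  { replace (- Z.of_nat (S n2) + Z.of_nat (n1 + S n2))%Z with (Z.of_nat n1) by lia; auto. }
  exists k. unfold P, J0 in *. split; [|auto].
  assert (E : A (- k) t = inv a (A (- (k - 1)) t)).
  { unfold A; rewrite <- zpow_m1, <- zpow_add by apply bij_a. f_equal; lia. }
  rewrite E. assert (7/8 <= A (- (k - 1)) t) by lra.
  destruct H as [H|H]; [left; rewrite <- ainv_78; apply ainv_incr; auto|rewrite <- H, ainv_78; lra].
Qed.

Definition Iin (k : Z) (t : R) : Prop := Ib (A (- k) t).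

Lemma bk_pt : forall k t, bk k t = A k (b (A (- k) t)). Proof. reflexivity. Qed.
Lemma zbk_pt : forall k m t, zpow (bk k) m t = A k (zpow b m (A (- k) t)).
Proof.
  intros k m t. unfold bk, A. rewrite <- (inv_zpow a k bij_a). apply zpow_conj; [apply bij_zpow, bij_a|apply bij_b].
Qed.
Lemma Iin_unique : forall k l t, Iin k t -> Iin l t -> k = l.
Proof. intros k l t H1 H2; apply (J0_unique k l t); unfold J0; unfold Iin, Ib in *; lra. Qed.
Lemma zbk_out : forall k m t, ~ Iin k t -> zpow (bk k) m t = t.
Proof. intros k m t H. rewrite zbk_pt, B_fix by auto. apply A_cancel'. Qed.
Lemma zbk_in : forall k m t, Iin k t -> Iin k (zpow (bk k) m t).
Proof.
  intros k m t H. unfold Iin. rewrite zbk_pt. replace (A (- k) (A k (zpow b m (A (- k) t)))) with (zpow b m (A (- k) t))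
    by (symmetry; apply A_cancel). apply B_in; auto.
Qed.
Lemma zbk_move : forall k m t, Iin k t -> m <> 0%Z -> zpow (bk k) m t <> t.
Proof.
  intros k m t H Hm E. rewrite zbk_pt in E. rewrite <- (A_cancel' k t) in E at 2. apply A_inj in E.
  destruct (B_in m _ H) as [_ C]. apply C; auto.
Qed.
Lemma Iin_iff : forall k t, Iin k t <-> A k (1/2) < t < A k (7/8).
Proof.
  intros k t; unfold Iin, Ib; split; intros [H1 H2].
  - apply (A_incr k) in H1; apply (A_incr k) in H2. rewrite A_cancel' in H1, H2. lra.
  - apply (A_incr (- k)) in H1; apply (A_incr (- k)) in H2. rewrite A_cancel in H1, H2. lra.
Qed.

Lemma bk_comm : forall k l, mul (bk k) (bk l) = mul (bk l) (bk k).
Proof.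
  intros k l. apply functional_extensionality; intros t; unfold mul.
  destruct (Z.eq_dec k l) as [->|Hkl]; [reflexivity|].
  rewrite <- !(zpow_1 (bk k)), <- !(zpow_1 (bk l)).
  destruct (classic (Iin k t)) as [Hk|Hk].
  - assert (Hl : ~ Iin l t) by (intros Hl; apply Hkl; eapply Iin_unique; eauto).
    rewrite (zbk_out l 1 t Hl). apply zbk_out. intros Hl'. apply Hkl. eapply Iin_unique; [apply (zbk_in k 1 t Hk)|eauto].
  - rewrite (zbk_out k 1 t Hk). destruct (classic (Iin l t)) as [Hl|Hl].
    + symmetry; apply zbk_out. intros Hk'. apply Hkl. eapply Iin_unique; [eauto|apply (zbk_in l 1 t Hl)].
    + rewrite (zbk_out l 1 t Hl), (zbk_out k 1 t Hk); reflexivity.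
Qed.

Definition PL (F : Z -> R -> R) (L : list Z) : R -> R := fold_right mul one (map F L).

Lemma PL_cons : forall F k L t, PL F (k :: L) t = PL F L (F k t). Proof. reflexivity. Qed.

Definition FF (mk : Z -> Z) (k : Z) : R -> R := zpow (bk k) (mk k).

Lemma prod_out : forall mk L t, (forall k, In k L -> ~ Iin k t) -> PL (FF mk) L t = t.
Proof.
  intros mk L; induction L as [|l L IH]; intros t H; [reflexivity|]. rewrite PL_cons. change (FF mk l t) with (zpow (bk l) (mk l) t).
  rewrite zbk_out by (apply H; left; auto). apply IH; intros; apply H; right; auto.
Qed.
Lemma prod_notin : forall mk L k t, Iin k t -> ~ In k L -> PL (FF mk) L t = t.
Proof.
  intros mk L k t H N; apply prod_out. intros l Hl Hl'. apply N. rewrite (Iin_unique k l t H Hl'); auto.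
Qed.
Lemma prod_in : forall mk L k t, NoDup L -> Iin k t -> In k L -> PL (FF mk) L t = FF mk k t.
Proof.
  intros mk L; induction L as [|l L IH]; intros k t ND H Hin; [contradiction|]. rewrite PL_cons.
  inversion ND; subst. destruct Hin as [<-|Hin].
  - apply (prod_notin mk L l); auto. change (FF mk l t) with (zpow (bk l) (mk l) t); apply zbk_in; auto.
  - assert (l <> k) by (intros E; subst; contradiction).
    change (FF mk l t) with (zpow (bk l) (mk l) t). rewrite zbk_out by (intros Hl; apply H0; eapply Iin_unique; eauto). apply IH; auto.
Qed.


Lemma zrange_In : forall N k, In k (zrange N) <-> (- Z.of_nat N <= k <= Z.of_nat N)%Z.
Proof.
  intros N k; unfold zrange; rewrite in_map_iff; split.
  - intros [i [<- Hi]]. apply in_seq in Hi. lia.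
  - intros H. exists (Z.to_nat (k + Z.of_nat N)). split; [lia|]. apply in_seq; lia.
Qed.
Lemma zrange_NoDup : forall N, NoDup (zrange N).
Proof.
  intros N; unfold zrange. apply NoDup_map_NoDup_ForallPairs; [|apply seq_NoDup].
  intros x y _ _ E; lia.
Qed.

Lemma half_not_Iin : forall k, ~ Iin k (1/2).
Proof.
  intros k H. assert (k = 0%Z).
  { apply (J0_unique k 0 (1/2)); unfold J0; [unfold Iin, Ib in H; lra|]. unfold A; rewrite Z.opp_0, zpow_0; lra. }
  subst. unfold Iin, Ib, A in H. rewrite Z.opp_0, zpow_0 in H. lra.
Qed.

Lemma freeness : forall (N : nat) (n : Z -> Z) (m : Z),
      mul (zprod N (fun k => zpow (bk k) (n k))) (zpow a m) = one ->
      m = 0%Z /\ forall k, (- Z.of_nat N <= k <= Z.of_nat N)%Z -> n k = 0%Z.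
Proof.
  intros N n m E.
  assert (P : forall t, zpow a m (PL (FF n) (zrange N) t) = t).
  { intros t. exact (f_equal (fun G => G t) E). }
  assert (Hm : m = 0%Z).
  { specialize (P (1/2)). rewrite prod_out in P by (intros; apply half_not_Iin).
    destruct (Z.eq_dec m 0) as [|Hm]; auto. exfalso. apply (O1 m (1/2)); auto; [unfold J0; lra|].
    fold (A m) in P; rewrite P. unfold J0; lra. }
  split; auto. subst m. intros k Hk.
  destruct (Z.eq_dec (n k) 0) as [|Hn]; auto. exfalso.
  set (t := A k (5/8)).
  assert (It : Iin k t) by (unfold Iin, t; rewrite A_cancel; unfold Ib; lra).
  specialize (P t). rewrite zpow_0 in P. rewrite (prod_in n (zrange N) k t) in P; auto.
  - apply (zbk_move k (n k) t It Hn P).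
  - apply zrange_NoDup.
  - apply zrange_In; auto.
Qed.

Lemma Vel_A : forall j, Vel (A j). Proof. intros; apply Gen_V, Gen_zpow, Gen_a. Qed.

Lemma gen2_PL : forall F L, (forall k, gen2 a b (F k)) -> gen2 a b (PL F L).
Proof. intros F L H; induction L; simpl; [constructor|constructor; auto]. Qed.


Lemma Lk (h : R -> R) (Vh : Vel h) (Ck : forall k t, bk k (h t) = h (bk k t)) : forall k, h (A k (1/2)) = A k (1/2) /\ exists m, forall t, Iin k t -> h t = zpow (bk k) m t.
Proof.
  intros k. set (hk := mul (mul (A k) h) (A (- k))).
  assert (Vk : Vel hk) by (apply Vel_mul; [apply Vel_mul; auto|]; apply Vel_A).
  assert (Cb : forall t, b (hk t) = hk (b t)).
  { intros t. unfold hk, mul. specialize (Ck k (A k t)). rewrite !bk_pt, A_cancel in Ck.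
    apply (f_equal (A (- k))) in Ck. rewrite A_cancel in Ck. exact Ck. }
  destruct (L2' hk Vk Cb) as [H1 [m Hm]].
  split.
  - unfold hk, mul in H1. apply (f_equal (A k)) in H1. rewrite A_cancel' in H1. exact H1.
  - exists m. intros t Ht. specialize (Hm _ Ht). unfold hk, mul in Hm. rewrite A_cancel' in Hm.
    rewrite zbk_pt, <- Hm, A_cancel'. reflexivity.
Qed.

Lemma h0 (h : R -> R) (Vh : Vel h) (Ck : forall k t, bk k (h t) = h (bk k t)) : h 0 = 0.
Proof.
  pose proof (Vel_bij h Vh) as Bh.
  assert (R0 : 0 <= h 0 < 1) by (destruct Vh as [_ [V2 _]]; apply V2; unfold in01; lra).
  destruct (Req_dec (h 0) 0) as [|N]; auto. exfalso.
  destruct (O2 (h 0) ltac:(lra)) as [k [K1 K2]].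
  destruct K1 as [K1|K1].
  - assert (Ik : Iin k (h 0)) by (unfold Iin, Ib; lra).
    assert (E : bk k (h 0) = h 0).
    { rewrite Ck, bk_pt, A_0. replace (b 0) with 0 by (rewrite b_eq; unfold bexp; split_g; lra). rewrite A_0; reflexivity. }
    rewrite <- zpow_1 in E. apply (zbk_move k 1 (h 0)); auto. lia.
  - destruct (Lk h Vh Ck k) as [L _]. rewrite K1, A_cancel' in L. apply (bij_inj h) in L; auto.
Qed.

Lemma finite_support (h : R -> R) (Vh : Vel h) (Ck : forall k t, bk k (h t) = h (bk k t)) : exists N, forall k, (Z.of_nat N < Z.abs k)%Z -> forall t, Iin k t -> h t = t.
Proof.
  pose proof Vh as [_ [_ [_ [_ [n [p [Hn [H0 [Hnn [Hd [Hinc Hsl]]]]]]]]]]].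
  assert (Bd : forall M, exists N, forall i k, (i < M)%nat -> Iin k (p i) -> (Z.abs k <= Z.of_nat N)%Z).
  { induction M.
    - exists 0%nat; intros; lia.
    - destruct IHM as [N HN]. destruct (classic (exists k, Iin k (p M))) as [[k0 Hk0]|NE].
      + exists (N + Z.to_nat (Z.abs k0))%nat. intros i k Hi Hk. destruct (Nat.eq_dec i M) as [->|Ne].
        * rewrite (Iin_unique k k0 (p M)); auto. lia.
        * specialize (HN i k ltac:(lia) Hk). lia.
      + exists N. intros i k Hi Hk. destruct (Nat.eq_dec i M) as [->|Ne].
        * exfalso; apply NE; eauto.
        * apply (HN i k); auto; lia. }
  destruct (Bd (S n)) as [N HN]. exists N. intros k Hk t Ht.
  destruct (Lk h Vh Ck k) as [Hq [m Hm]].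
  set (q := A k (1/2)) in *. set (r := A k (7/8)).
  assert (Hqr : q < r) by (apply A_incr; lra).
  assert (Rq : 0 <= q < 1) by (apply (A_in01 k); unfold in01; lra).
  assert (Ex : forall j, (j <= n)%nat -> q < p j -> exists i, (i < j)%nat /\ p i <= q < p (S i)).
  { induction j; intros Hj Hlt; [lra|].
    destruct (Rle_dec (p j) q).
    - exists j; split; [lia|lra].
    - destruct (IHj ltac:(lia) ltac:(lra)) as [i [Hi1 Hi2]]. exists i; split; [lia|auto]. }
  destruct (Ex n (le_n n) ltac:(lra)) as [i [Hi [Hi1 Hi2]]].
  assert (Hr : r <= p (S i)).
  { destruct (Rle_dec r (p (S i))) as [X|X]; auto. exfalso.
    assert (Iin k (p (S i))) by (apply Iin_iff; fold q r; lra).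
    specialize (HN (S i) k ltac:(lia) H). lia. }
  destruct (Hsl i Hi) as [_ [e He]].
  assert (Aff : forall s, q <= s < r -> h s = q + powerRZ 2 e * (s - q)).
  { intros s Hs. rewrite (He s) by lra. rewrite <- Hq at 1. rewrite (He q) by lra. ring. }
  pose proof (powerRZ2_pos e) as Pe. set (c := powerRZ 2 e) in *.
  assert (Rng : forall s, Iin k s -> q < s < r) by (intros s Hs; apply Iin_iff in Hs; auto).
  assert (Hc : c = 1).
  { destruct (Rtotal_order c 1) as [L|[L|L]]; auto; exfalso.
    - set (u := q + (r - q) * (1 + c) / 2).
      assert (Iu : Iin k u).
      { apply Iin_iff; fold q r. unfold u. split.
        - assert (0 < (r - q) * (1 + c) / 2) by (apply Rmult_lt_0_compat; [apply Rmult_lt_0_compat|]; lra). lra.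
        - assert ((r - q) * (1 + c) / 2 < r - q) by nra. lra. }
      set (t1 := zpow (bk k) (- m) u).
      assert (It1 : Iin k t1) by (apply zbk_in; auto).
      assert (E : h t1 = u) by (rewrite Hm by auto; unfold t1; apply zpow_cancel', bij_bk).
      destruct (Rng _ It1) as [T1 T2]. rewrite Aff in E by lra.
      assert (c * (t1 - q) < c * (r - q)) by (apply Rmult_lt_compat_l; lra).
      assert (c * (r - q) < (r - q) * (1 + c) / 2).
      { apply Rmult_lt_reg_r with 2; [lra|]. field_simplify. nra. }
      unfold u in E. lra.
    - set (t0 := q + (r - q) / c).
      assert (T0 : q < t0 < r).
      { unfold t0. split.
        - assert (0 < (r - q) / c) by (apply Rdiv_lt_0_compat; lra). lra.
        - assert ((r - q) / c < r - q).
          { apply Rmult_lt_reg_r with c; [lra|]. field_simplify; [|lra]. nra. } lra. }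
      assert (It0 : Iin k t0) by (apply Iin_iff; fold q r; lra).
      pose proof (zbk_in k m t0 It0) as I2. rewrite <- Hm in I2 by auto.
      destruct (Rng _ I2) as [_ X]. rewrite Aff in X by lra.
      unfold t0 in X. replace (q + c * (q + (r - q) / c - q)) with r in X by (field; lra). lra. }
  destruct (Rng _ Ht) as [T1 T2]. rewrite Aff by lra. rewrite Hc; ring.
Qed.

Lemma L2_main (h : R -> R) (Vh : Vel h) (Ck : forall k t, bk k (h t) = h (bk k t)) : gen2 a b h.
Proof.
  assert (HM : forall k, {m | forall t, Iin k t -> h t = zpow (bk k) m t}).
  { intros k; apply constructive_indefinite_description. destruct (Lk h Vh Ck k) as [_ X]; exact X. }
  set (mk := fun k => proj1_sig (HM k)).
  assert (Hmk : forall k t, Iin k t -> h t = zpow (bk k) (mk k) t) by (intros k; exact (proj2_sig (HM k))).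
  destruct (finite_support h Vh Ck) as [N HN].
  set (F := FF mk).
  assert (E : h = PL F (zrange N)).
  { apply functional_extensionality; intros t.
    assert (Out : (forall k, ~ Iin k t) -> PL F (zrange N) t = t).
    { intros H; apply (prod_out mk); auto. }
    destruct (classic (in01 t)) as [Ht|Ht].
    - destruct (Req_dec t 0) as [T0|T0].
      + subst t. rewrite (h0 h Vh Ck), Out; auto. intros k Hk. unfold Iin in Hk. rewrite A_0 in Hk. unfold Ib in Hk; lra.
      + destruct (O2 t ltac:(unfold in01 in Ht; lra)) as [k [K1 K2]]. destruct K1 as [K1|K1].
        * assert (Ik : Iin k t) by (unfold Iin, Ib; lra).
          destruct (Z_le_gt_dec (Z.abs k) (Z.of_nat N)) as [L|L].
          -- rewrite (Hmk k t Ik). unfold F. rewrite (prod_in mk (zrange N) k t); auto.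
             ++ apply zrange_NoDup.
             ++ apply zrange_In; lia.
          -- rewrite (HN k ltac:(lia) t Ik). symmetry. apply (prod_notin mk (zrange N) k t); auto.
             rewrite zrange_In; lia.
        * assert (Tq : t = A k (1/2)) by (rewrite K1, A_cancel'; reflexivity).
          rewrite Out.
          { destruct (Lk h Vh Ck k) as [L _]. rewrite Tq; auto. }
          intros l Il. unfold Iin, Ib in Il.
          assert (l = k) by (apply (J0_unique l k t); unfold J0; lra). subst l. lra.
    - destruct Vh as [V1 _]. rewrite V1 by auto. rewrite Out; auto.
      intros k Hk. unfold Iin in Hk. rewrite A_out in Hk by auto. apply Ht. unfold Ib in Hk; unfold in01; lra. }
  rewrite E. apply gen2_PL. intros k; apply gen2_zpow, gen2_bk.
Qed.

Lemma bk_shift : forall k j v, bk k (A j v) = A j (bk (k - j) v).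
Proof.
  intros k j v. rewrite !bk_pt. rewrite <- A_add. rewrite <- (A_add _ j).
  f_equal; [lia|]. f_equal. f_equal. lia.
Qed.

Definition Comm (h : R -> R) := forall k t, bk k (h t) = h (bk k t).

Lemma Comm_conj : forall h j, Comm h -> Comm (mul (mul (A (- j)) h) (A j)).
Proof.
  intros h j C k t. unfold mul. rewrite bk_shift, C.
  replace (bk (k - j) (A (- j) t)) with (A (- j) (bk k t)); [reflexivity|].
  rewrite bk_shift. f_equal. f_equal. lia.
Qed.

Lemma Comm_mul : forall f g, Comm f -> Comm g -> Comm (mul f g).
Proof. intros f g Cf Cg k t; unfold mul; rewrite Cg, Cf; reflexivity. Qed.

Lemma Comm_inv : forall h, bij h -> Comm h -> Comm (inv h).
Proof.
  intros h Bh C k t. apply (bij_inj h); auto. rewrite <- C. destruct Bh as [B1 B2]. rewrite !B2; reflexivity.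
Qed.

Lemma Comm_bk : forall j, Comm (bk j).
Proof. intros j k t. exact (f_equal (fun F => F t) (bk_comm j k)). Qed.

Lemma NF : forall g, gen2 a b g -> exists j h, Gen h /\ Comm h /\ g = mul (A j) h.
Proof.
  intros g G; induction G.
  - exists 1%Z, one. split; [constructor|split; [intros k t; reflexivity|]]. reflexivity.
  - exists 0%Z, b. split; [apply Gen_b|split].
    + intros k t. pose proof (Comm_bk 0 k t). rewrite !bk_pt in H. unfold A in H; rewrite Z.opp_0, !zpow_0 in H.
      rewrite <- !bk_pt in H. exact H.
    + reflexivity.
  - exists 0%Z, one. split; [constructor|split; [intros k t; reflexivity|reflexivity]].
  - destruct IHG1 as [j1 [h1 [Gh1 [C1 E1]]]]. destruct IHG2 as [j2 [h2 [Gh2 [C2 E2]]]].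
    exists (j1 + j2)%Z, (mul (mul (mul (A (- j2)) h1) (A j2)) h2). split; [|split].
    + apply G_mul; auto. apply G_mul; [apply G_mul; auto|]; apply Gen_zpow, Gen_a.
    + apply Comm_mul; auto. apply Comm_conj; auto.
    + subst. apply functional_extensionality; intros t. unfold mul. rewrite <- (A_add (j1 + j2) (- j2)).
      replace (j1 + j2 + - j2)%Z with j1 by lia. reflexivity.
  - destruct IHG as [j [h [Gh [C E]]]].
    assert (Bh : bij h) by (apply Gen_bij; auto).
    exists (- j)%Z, (mul (mul (A (- - j)) (inv h)) (A (- j))). split; [|split].
    + apply G_mul; [apply G_mul|]; [apply Gen_zpow, Gen_a|apply Gen_inv; auto|apply Gen_zpow, Gen_a].
    + apply Comm_conj, Comm_inv; auto.
    + subst. rewrite inv_mul by (auto; apply bij_zpow, bij_a). unfold A at 1. rewrite inv_zpow by apply bij_a.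
      apply functional_extensionality; intros t. unfold mul. rewrite A_cancel. reflexivity.
Qed.

Lemma A_x0 : forall j t, A j t = zpow x0 (2 * j) t.
Proof. intros j t. unfold A. change a with (zpow x0 2). apply zpow_zpow, bij_x0. Qed.

Lemma yy_A : forall j, mul (zpow x0 j) (zpow x0 j) = A j.
Proof.
  intros j. rewrite zpow_mul_eq by apply bij_x0. apply functional_extensionality; intros t.
  rewrite A_x0. f_equal. lia.
Qed.

Lemma conjw : forall k, bk k = mul (mul (mul (mul (inv (zpow x0 k)) (inv (zpow x0 k))) b) (zpow x0 k)) (zpow x0 k).
Proof.
  intros k. rewrite inv_zpow by apply bij_x0. apply functional_extensionality; intros t.
  unfold mul. rewrite bk_pt, !A_x0. rewrite <- !zpow_add by apply bij_x0. f_equal; [lia|]. f_equal. f_equal. lia.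
Qed.

Lemma zpow_x0_comm : forall j, mul (zpow x0 j) x0 = mul x0 (zpow x0 j).
Proof.
  intros j; apply functional_extensionality; intros t; unfold mul.
  rewrite <- (zpow_1 x0 (zpow x0 j t)), <- (zpow_1 x0 t), <- !zpow_add by apply bij_x0. f_equal; lia.
Qed.

Definition tb : term := tmul (tmul (tmul (tpar 1) (tinv (tpar 0))) (tinv (tpar 1))) (tpar 0).
Definition fcomm (t1 t2 : term) : formula := feq (tmul t1 t2) (tmul t2 t1).
Definition fimp (p q : formula) : formula := fnot (fand p (fnot q)).
Definition fall (n : nat) (p : formula) : formula := fnot (fex n (fnot p)).
Definition Kz : formula :=
  fex 4 (fand (fcomm (tvar 4) (tpar 0))
              (feq (tvar 3) (tmul (tmul (tmul (tmul (tinv (tvar 4)) (tinv (tvar 4))) tb) (tvar 4)) (tvar 4)))).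
Definition Cent : formula := fall 3 (fimp Kz (fcomm (tvar 2) (tvar 3))).
Definition phi : formula :=
  fex 1 (fex 2 (fand (fcomm (tvar 1) (tpar 0)) (fand Cent (feq (tvar 0) (tmul (tmul (tvar 1) (tvar 1)) (tvar 2)))))).
Definition ps : list (R -> R) := x0 :: x1 :: nil.

Lemma sat_phi : forall D g,
  sat D ps (fun n => match n with O => g | S _ => one end) phi <->
  exists y, D y /\ exists h, D h /\ mul y x0 = mul x0 y /\
    (forall z, D z -> (exists w, D w /\ mul w x0 = mul x0 w /\
                         z = mul (mul (mul (mul (inv w) (inv w)) b) w) w) -> mul h z = mul z h) /\
    g = mul (mul y y) h.
Proof.
  intros D g. simpl. unfold upd; simpl. split.
  - intros [y [Dy [h [Dh [C1 [C2 E]]]]]]. exists y; split; [exact Dy|]; exists h; split; [exact Dh|].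
    split; [exact C1|split; [|exact E]].
    intros z Dz Kw. apply NNPP; intros N. apply C2. exists z; split; [exact Dz|]. intros N2; apply N2; split; [exact Kw|exact N].
  - intros [y [Dy [h [Dh [C1 [C2 E]]]]]]. exists y; split; [exact Dy|]; exists h; split; [exact Dh|].
    split; [exact C1|split; [|exact E]].
    intros [z [Dz N]]. apply N. intros [Kw N2]. apply N2. apply C2; [exact Dz|exact Kw].
Qed.

Lemma defines_all : forall D, (forall f, D f -> Vel f) -> (forall f, Gen f -> D f) -> defines D ps phi (gen2 a b).
Proof.
  intros D DV GD g Dg. rewrite sat_phi. split.
  - intros [y [Dy [h [Dh [Cy [Ch E]]]]]].
    destruct (L1 y (DV y Dy) Cy) as [j ->].
    assert (Hc : Comm h).
    { intros k t. assert (Z : mul h (bk k) = mul (bk k) h).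
      { apply Ch; [apply GD, Gen_bk|]. exists (zpow x0 k). split; [apply GD, Gen_zpow; apply G_x0|].
        split; [apply zpow_x0_comm|apply conjw]. }
      exact (f_equal (fun F => F t) Z). }
    pose proof (L2_main h (DV h Dh) Hc) as Gh.
    rewrite E, yy_A. apply gen2_mul; auto. unfold A; apply gen2_zpow; apply gen2_l.
  - intros G. destruct (NF g G) as [j [h [Gh [Ch E]]]].
    exists (zpow x0 j); split; [apply GD, Gen_zpow; apply G_x0|].
    exists h; split; [apply GD; auto|]. split; [apply zpow_x0_comm|split].
    + intros z Dz [w [Dw [Cw Ez]]]. destruct (L1 w (DV w Dw) Cw) as [i ->]. rewrite <- conjw in Ez. subst z.
      apply functional_extensionality; intros t; unfold mul; apply Ch.
    + rewrite yy_A; auto.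
Qed.

Theorem proposition3p3 :
  Fel x0 /\ Fel x1 /\
  (forall k l : Z, mul (bk k) (bk l) = mul (bk l) (bk k)) /\
  (forall (N : nat) (n : Z -> Z) (m : Z),
      mul (zprod N (fun k => zpow (bk k) (n k))) (zpow a m) = one ->
      m = 0%Z /\ forall k, (- Z.of_nat N <= k <= Z.of_nat N)%Z -> n k = 0%Z) /\
  exists (phi : formula) (ps : list (R -> R)),
    Forall Fel ps /\
    defines Fel ps phi (gen2 a b) /\
    defines Tel ps phi (gen2 a b) /\
    defines Vel ps phi (gen2 a b).
Proof.
  split; [apply Gen_F, G_x0|]. split; [apply Gen_F, G_x1|].
  split; [exact bk_comm|]. split; [exact freeness|].
  exists phi, ps. split; [|split; [|split]].
  - unfold ps; apply Forall_cons; [apply Gen_F, G_x0|apply Forall_cons; [apply Gen_F, G_x1|apply Forall_nil]].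
  - apply defines_all; [intros f H; apply H|apply Gen_F].
  - apply defines_all; [intros f H; apply H|apply Gen_T].
  - apply defines_all; [intros f H; apply H|apply Gen_V].
Qed.
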